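(* Let $\Lambda,\mu,\beta,\rho,\phi,\alpha,\omega>0$, $\psi\ge 0$, $0<\eta_C\le1$, $\eta_A\ge 1$, and set $\beta_1=\beta\mu/\Lambda$, $\xi_1=\alpha+\mu$, $\xi_2=\omega+\mu$, $\xi_3=\rho+\phi+\mu$. Consider the system \begin{align*} \dot S&=\Lambda-\beta_1(I+\eta_C C+\eta_A A)S-(\mu+\psi)S,\\ \dot I&=\beta_1(I+\eta_C C+\eta_A A)S-\xi_3 I+\alpha A+\omega C,\\ \dot C&=\phi I-\xi_2 C,\\ \dot A&=\rho I-\xi_1 A,\\ \dot E&=\psi S-\mu E, \end{align*} on the region $\Omega_P=\{(S,I,C,A,E)\in\mathbb{R}_{\ge0}^5: S\le \Lambda/(\psi+\mu),\ E\le \psi\Lambda/(\mu(\psi+\mu)),\ S+I+C+A+E\le\Lambda/\mu\}$, and let $\Omega_{P0}=\{(S,I,C,A,E)\in\Omega_P: I=C=A=0\}$. Define $$R_0=\frac{\Lambda\,\beta_1\bigl(\xi_2(\xi_1+\rho\eta_A)+\eta_C\phi\xi_1\bigr)}{(\mu+\psi)\,\mu\bigl(\xi_2(\rho+\xi_1)+\phi\xi_1\bigr)}.$$ If $R_0>1$, then the unique endemic equilibrium $\tilde\Sigma_+=(\tilde S,\tilde I,\tilde C,\tilde A,\tilde E)$ of this system (the unique equilibrium with $\tilde I,\tilde C,\tilde A>0$), whose first and last components are $$\tilde S=\frac{\mu(\xi_1(\phi+\xi_2)+\rho\xi_2)}{\beta_1(\xi_1(\xi_2+\eta_C\phi)+\eta_A\rho\xi_2)},\qquad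 \tilde E=\frac{\psi\,\tilde S}{\mu},$$ is globally asymptotically stable in $\Omega_P\setminus\Omega_{P0}$.
   Context: This is the limiting (mass-action) form of an HIV/AIDS model with pre-exposure prophylaxis (PrEP), in the case of zero AIDS-induced death rate and no abandonment of PrEP: $S$ susceptible, $I$ pre-AIDS HIV-infected, $C$ HIV-infected under antiretroviral treatment, $A$ with AIDS symptoms, $E$ susceptible individuals under PrEP; $\psi$ is the rate at which susceptibles start PrEP. $R_0$ is the basic reproduction number of this system. *)

(* Defs.v *)
From Stdlib Require Import Reals Lra.
Open Scope R_scope.

Record State : Type := mkState { sS : R; sI : R; sC : R; sA : R; sE : R }.

Record Params : Type := mkParams {
  Lam : R; mu : R; beta : R; rho : R; phi : R; alpha : R; omega : R;
  psi : R; etaC : R; etaA : R }.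

Section Model.
Variable P : Params.
Let Lam := Lam P. Let mu := mu P. Let beta := beta P. Let rho := rho P.
Let phi := phi P. Let alpha := alpha P. Let omega := omega P. Let psi := psi P.
Let etaC := etaC P. Let etaA := etaA P.

Definition beta1 : R := beta * mu / Lam.
Definition xi1 : R := alpha + mu.
Definition xi2 : R := omega + mu.
Definition xi3 : R := rho + phi + mu.

Definition fS (x : State) : R :=
  Lam - beta1 * (sI x + etaC * sC x + etaA * sA x) * sS x - (mu + psi) * sS x.
Definition fI (x : State) : R :=
  beta1 * (sI x + etaC * sC x + etaA * sA x) * sS x - xi3 * sI x
  + alpha * sA x + omega * sC x.
Definition fC (x : State) : R := phi * sI x - xi2 * sC x.
Definition fA (x : State) : R := rho * sI x - xi1 * sA x.
Definition fE (x : State) : R := psi * sS x - mu * sE x.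

Definition is_equilibrium (x : State) : Prop :=
  fS x = 0 /\ fI x = 0 /\ fC x = 0 /\ fA x = 0 /\ fE x = 0.

Definition OmegaP (x : State) : Prop :=
  0 <= sS x /\ 0 <= sI x /\ 0 <= sC x /\ 0 <= sA x /\ 0 <= sE x /\
  sS x <= Lam / (psi + mu) /\
  sE x <= psi * Lam / (mu * (psi + mu)) /\
  sS x + sI x + sC x + sA x + sE x <= Lam / mu.

Definition OmegaP0 (x : State) : Prop :=
  OmegaP x /\ sI x = 0 /\ sC x = 0 /\ sA x = 0.

Definition repro_number : R :=
  Lam * beta1 * (xi2 * (xi1 + rho * etaA) + etaC * phi * xi1)
  / ((mu + psi) * mu * (xi2 * (rho + xi1) + phi * xi1)).

Definition is_solution (x : R -> State) : Prop :=
  (forall t, 0 < t ->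
     derivable_pt_lim (fun s => sS (x s)) t (fS (x t)) /\
     derivable_pt_lim (fun s => sI (x s)) t (fI (x t)) /\
     derivable_pt_lim (fun s => sC (x s)) t (fC (x t)) /\
     derivable_pt_lim (fun s => sA (x s)) t (fA (x t)) /\
     derivable_pt_lim (fun s => sE (x s)) t (fE (x t))) /\
  (forall g : State -> R, (g = sS \/ g = sI \/ g = sC \/ g = sA \/ g = sE) ->
     forall eps, 0 < eps -> exists delta, 0 < delta /\
       forall t, 0 <= t < delta -> Rabs (g (x t) - g (x 0)) < eps).

End Model.

Definition dist5 (x y : State) : R :=
  sqrt ((sS x - sS y)^2 + (sI x - sI y)^2 + (sC x - sC y)^2
        + (sA x - sA y)^2 + (sE x - sE y)^2).

Definition GAS_on (is_sol : (R -> State) -> Prop) (D : State -> Prop) (p : State)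
  : Prop :=
  (forall eps, 0 < eps -> exists delta, 0 < delta /\
     forall x, is_sol x -> D (x 0) -> dist5 (x 0) p < delta ->
       forall t, 0 <= t -> dist5 (x t) p < eps) /\
  (forall x, is_sol x -> D (x 0) ->
     forall eps, 0 < eps -> exists T, forall t, T <= t -> dist5 (x t) p < eps).

(* Main.v *)
Require Import Defs.
From Stdlib Require Import Reals Lra Psatz Classical.
Open Scope R_scope.

Lemma Rabs_le_between x a : Rabs x <= a -> - a <= x <= a.
Proof. intro H. unfold Rabs in H. destruct (Rcase_abs x); lra. Qed.
Lemma Rabs_lt_between x a : Rabs x < a -> - a < x < a.
Proof. intro H. unfold Rabs in H. destruct (Rcase_abs x); lra. Qed.

Lemma dpl_plus f g t a b : derivable_pt_lim f t a -> derivable_pt_lim g t b ->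
  derivable_pt_lim (fun s => f s + g s) t (a + b).
Proof. intros H1 H2; exact (derivable_pt_lim_plus f g t a b H1 H2). Qed.
Lemma dpl_minus f g t a b : derivable_pt_lim f t a -> derivable_pt_lim g t b ->
  derivable_pt_lim (fun s => f s - g s) t (a - b).
Proof. intros H1 H2; exact (derivable_pt_lim_minus f g t a b H1 H2). Qed.
Lemma dpl_mult f g t a b : derivable_pt_lim f t a -> derivable_pt_lim g t b ->
  derivable_pt_lim (fun s => f s * g s) t (a * g t + f t * b).
Proof. intros H1 H2; exact (derivable_pt_lim_mult f g t a b H1 H2). Qed.
Lemma dpl_const c t : derivable_pt_lim (fun _ => c) t 0.
Proof. exact (derivable_pt_lim_const c t). Qed.
Lemma dpl_id t : derivable_pt_lim (fun s => s) t 1.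
Proof. exact (derivable_pt_lim_id t). Qed.
Lemma dpl_scal c f t a : derivable_pt_lim f t a ->
  derivable_pt_lim (fun s => c * f s) t (c * a).
Proof.
  intro H. replace (c * a) with (0 * f t + c * a) by ring.
  apply (dpl_mult (fun _ => c) f); [apply dpl_const | exact H].
Qed.
Lemma dpl_ln f t a : derivable_pt_lim f t a -> 0 < f t ->
  derivable_pt_lim (fun s => ln (f s)) t (/ f t * a).
Proof.
  intros H Hp. exact (derivable_pt_lim_comp f ln t a (/ f t) H (derivable_pt_lim_ln _ Hp)).
Qed.
Lemma dpl_exp f t a : derivable_pt_lim f t a ->
  derivable_pt_lim (fun s => exp (f s)) t (exp (f t) * a).
Proof.
  intros H. exact (derivable_pt_lim_comp f exp t a (exp (f t)) H (derivable_pt_lim_exp _)).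
Qed.

Lemma dpl_eqd f t a b : a = b -> derivable_pt_lim f t a -> derivable_pt_lim f t b.
Proof. intros ->; auto. Qed.

Lemma dpl_cont f t d : derivable_pt_lim f t d ->
  forall eps, 0 < eps -> exists del, 0 < del /\
    forall s, Rabs (s - t) < del -> Rabs (f s - f t) < eps.
Proof.
  intros H eps He.
  assert (Hc : continuity_pt f t) by (apply derivable_continuous_pt; exists d; exact H).
  destruct (Hc eps He) as [al [Hal Hal2]].
  exists al; split; auto. intros s Hs.
  destruct (Req_dec s t) as [->|Hne].
  - rewrite Rminus_diag, Rabs_R0; auto.
  - apply (Hal2 s). split; [split; [exact I| auto] | exact Hs].
Qed.

Lemma mvt_lb f f' a b eta : a <= b ->
  (forall c, a <= c <= b -> derivable_pt_lim f c (f' c)) ->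
  (forall c, a < c < b -> eta <= f' c) -> eta * (b - a) <= f b - f a.
Proof.
  intros Hab Hd Hl. destruct (Req_dec a b) as [<-|Hne].
  - lra.
  - destruct (MVT_cor2 f f' a b ltac:(lra) Hd) as [c [Hc1 Hc2]].
    rewrite Hc1. apply Rmult_le_compat_r; [lra|]. apply Hl; lra.
Qed.
Lemma mvt_ub f f' a b eta : a <= b ->
  (forall c, a <= c <= b -> derivable_pt_lim f c (f' c)) ->
  (forall c, a < c < b -> f' c <= eta) -> f b - f a <= eta * (b - a).
Proof.
  intros Hab Hd Hl. destruct (Req_dec a b) as [<-|Hne].
  - lra.
  - destruct (MVT_cor2 f f' a b ltac:(lra) Hd) as [c [Hc1 Hc2]].
    rewrite Hc1. apply Rmult_le_compat_r; [lra|]. apply Hl; lra.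
Qed.
Lemma mvt_abs f f' a b K : a <= b ->
  (forall c, a <= c <= b -> derivable_pt_lim f c (f' c)) ->
  (forall c, a < c < b -> Rabs (f' c) <= K) -> Rabs (f b - f a) <= K * (b - a).
Proof.
  intros Hab Hd Hl. apply Rabs_le. split.
  - assert (H := mvt_lb f f' a b (-K) Hab Hd).
    assert (-K * (b-a) <= f b - f a); [|lra].
    apply H. intros c Hc. specialize (Hl c Hc). apply Rabs_le_between in Hl. lra.
  - apply (mvt_ub f f' a b K Hab Hd). intros c Hc. specialize (Hl c Hc).
    apply Rabs_le_between in Hl. lra.
Qed.

Definition rc (f : R -> R) := forall eps, 0 < eps -> exists del, 0 < del /\
  forall t, 0 <= t < del -> Rabs (f t - f 0) < eps.

Lemma rc_const c : rc (fun _ => c).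
Proof. intros e He; exists 1; split; [lra|]; intros; rewrite Rminus_diag, Rabs_R0; auto. Qed.
Lemma rc_plus f g : rc f -> rc g -> rc (fun t => f t + g t).
Proof.
  intros Hf Hg e He. destruct (Hf (e/2) ltac:(lra)) as [d1 [Hd1 H1]].
  destruct (Hg (e/2) ltac:(lra)) as [d2 [Hd2 H2]].
  exists (Rmin d1 d2); split; [apply Rmin_pos; auto|]. intros t Ht.
  assert (Ht1: 0 <= t < d1) by (pose proof (Rmin_l d1 d2); lra).
  assert (Ht2: 0 <= t < d2) by (pose proof (Rmin_r d1 d2); lra).
  specialize (H1 t Ht1); specialize (H2 t Ht2).
  replace (f t + g t - (f 0 + g 0)) with ((f t - f 0) + (g t - g 0)) by ring.
  eapply Rle_lt_trans; [apply Rabs_triang|]. lra.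
Qed.
Lemma rc_mult f g : rc f -> rc g -> rc (fun t => f t * g t).
Proof.
  intros Hf Hg e He.
  set (B := Rabs (f 0) + Rabs (g 0) + 1).
  assert (HB : 0 < B) by (unfold B; pose proof (Rabs_pos (f 0)); pose proof (Rabs_pos (g 0)); lra).
  set (e1 := Rmin 1 (e / (2 * B))).
  assert (He1 : 0 < e1) by (apply Rmin_pos; [lra| apply Rdiv_lt_0_compat; lra]).
  destruct (Hf e1 He1) as [d1 [Hd1 H1]].
  destruct (Hg e1 He1) as [d2 [Hd2 H2]].
  exists (Rmin d1 d2); split; [apply Rmin_pos; auto|]. intros t Ht.
  assert (Ht1: 0 <= t < d1) by (pose proof (Rmin_l d1 d2); lra).
  assert (Ht2: 0 <= t < d2) by (pose proof (Rmin_r d1 d2); lra).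
  specialize (H1 t Ht1); specialize (H2 t Ht2).
  replace (f t * g t - f 0 * g 0) with ((f t - f 0) * (g t - g 0) + (f t - f 0) * g 0 + f 0 * (g t - g 0)) by ring.
  assert (Hle1 : e1 <= 1) by apply Rmin_l.
  assert (Hle2 : e1 <= e / (2 * B)) by apply Rmin_r.
  assert (HeB : e1 * B <= e / 2).
  { apply Rle_trans with (e / (2 * B) * B). apply Rmult_le_compat_r; lra.
    right; field; lra. }
  eapply Rle_lt_trans; [apply Rabs_triang|].
  eapply Rle_lt_trans; [apply Rplus_le_compat_r; apply Rabs_triang|].
  rewrite !Rabs_mult.
  pose proof (Rabs_pos (f t - f 0)); pose proof (Rabs_pos (g t - g 0)).
  pose proof (Rabs_pos (f 0)); pose proof (Rabs_pos (g 0)).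
  assert (Rabs (f t - f 0) * Rabs (g t - g 0) <= e1 * e1) by (apply Rmult_le_compat; lra).
  assert (Rabs (f t - f 0) * Rabs (g 0) <= e1 * Rabs (g 0)) by (apply Rmult_le_compat_r; lra).
  assert (Rabs (f 0) * Rabs (g t - g 0) <= Rabs (f 0) * e1) by (apply Rmult_le_compat_l; lra).
  assert (e1 * e1 <= e1 * 1) by (apply Rmult_le_compat_l; lra).
  assert (e1 * e1 + e1 * Rabs (g 0) + Rabs (f 0) * e1 <= e1 * B) by (unfold B; nra).
  assert (Rabs (f t - f 0) * Rabs (g t - g 0) < e1 * e1 \/
          Rabs (f t - f 0) * Rabs (g 0) < e1 * Rabs (g 0) + e1 \/ True) by auto.
  assert (Rabs (f t - f 0) * Rabs (g t - g 0) + Rabs (f t - f 0) * Rabs (g 0) + Rabs (f 0) * Rabs (g t - g 0)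
          <= e1 * B) by lra.
  lra.
Qed.
Lemma rc_scal c f : rc f -> rc (fun t => c * f t).
Proof. intro H. apply (rc_mult (fun _ => c) f); [apply rc_const| exact H]. Qed.
Lemma rc_minus f g : rc f -> rc g -> rc (fun t => f t - g t).
Proof.
  intros Hf Hg. assert (H := rc_plus f (fun t => -1 * g t) Hf (rc_scal (-1) g Hg)).
  intros e He. destruct (H e He) as [d [Hd Hd2]]. exists d; split; auto.
  intros t Ht. specialize (Hd2 t Ht).
  replace (f t - g t - (f 0 - g 0)) with (f t + -1 * g t - (f 0 + -1 * g 0)) by ring. auto.
Qed.
Lemma rc_of_dpl f d : derivable_pt_lim f 0 d -> rc f.
Proof.
  intros H e He. destruct (dpl_cont f 0 d H e He) as [del [Hd H2]].
  exists del; split; auto. intros t Ht. apply H2. rewrite Rminus_0_r, Rabs_right; lra.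
Qed.
Lemma rc_pos f : rc f -> 0 < f 0 -> exists h, 0 < h /\ forall t, 0 <= t < h -> 0 < f t.
Proof.
  intros H Hp. destruct (H (f 0) Hp) as [d [Hd H2]]. exists d; split; auto.
  intros t Ht. specialize (H2 t Ht). apply Rabs_def2 in H2. lra.
Qed.

Lemma rc_incr f d h : rc f ->
  (forall t, 0 < t < h -> derivable_pt_lim f t (d t)) ->
  (forall t, 0 < t < h -> 0 < d t) ->
  forall t, 0 < t < h -> f 0 < f t.
Proof.
  intros Hrc Hd Hpos t Ht.
  assert (Hmid : f (t/2) < f t).
  { destruct (MVT_cor2 f d (t/2) t ltac:(lra)) as [c [Hc1 Hc2]].
    - intros c Hc. apply Hd. lra.
    - assert (0 < d c) by (apply Hpos; lra). nra. }
  assert (f 0 <= f (t/2)).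
  { apply Rnot_lt_le. intro Hlt.
    destruct (Hrc (f 0 - f (t/2)) ltac:(lra)) as [del [Hdel Hdel2]].
    set (s := Rmin (del/2) (t/2)).
    assert (Hs0 : 0 < s) by (apply Rmin_pos; lra).
    assert (Hs1 : s <= del/2) by apply Rmin_l.
    assert (Hs2 : s <= t/2) by apply Rmin_r.
    specialize (Hdel2 s ltac:(lra)). apply Rabs_def2 in Hdel2.
    assert (f s <= f (t/2)).
    { assert (H := mvt_lb f d s (t/2) 0 Hs2).
      assert (0 * (t/2 - s) <= f (t/2) - f s); [|lra].
      apply H. intros c Hc; apply Hd; lra. intros c Hc; left; apply Hpos; lra. }
    lra. }
  lra.
Qed.

Lemma cont_ind (good : R -> Prop) a :
  good a ->
  (forall t, a < t -> (forall s, a <= s < t -> good s) -> good t) ->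
  (forall t, a <= t -> (forall s, a <= s <= t -> good s) ->
     exists h, 0 < h /\ forall s, t <= s < t + h -> good s) ->
  forall t, a <= t -> good t.
Proof.
  intros Ha Hstep Hopen t1 Ht1.
  destruct (classic (good t1)) as [G|NG]; auto. exfalso.
  set (E := fun u => a <= u <= t1 /\ forall s, a <= s <= u -> good s).
  assert (Hb : bound E) by (exists t1; intros u [Hu _]; lra).
  assert (Hne : exists u, E u).
  { exists a. split; [lra|]. intros s Hs. replace s with a by lra; auto. }
  destruct (completeness E Hb Hne) as [tau [Hub Hlub]].
  assert (Hat : a <= tau) by (apply Hub; destruct Hne as [u Hu]; split; [lra|];
                                intros s Hs; replace s with a by lra; auto).
  assert (Htt : tau <= t1) by (apply Hlub; intros u [Hu _]; lra).
  assert (Hbefore : forall s, a <= s < tau -> good s).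
  { intros s Hs. apply NNPP. intro Ns.
    assert (tau <= s); [|lra]. apply Hlub. intros u [Hu1 Hu2].
    apply Rnot_lt_le. intro Hsu. apply Ns. apply Hu2. lra. }
  assert (Gtau : good tau).
  { destruct (Req_dec tau a) as [->|Hne2]; auto. apply Hstep; [lra| auto]. }
  assert (Hupto : forall s, a <= s <= tau -> good s).
  { intros s Hs. destruct (Req_dec s tau) as [->|]; auto. apply Hbefore; lra. }
  destruct (Req_dec tau t1) as [Heq|Hlt].
  - subst tau. auto.
  - destruct (Hopen tau Hat Hupto) as [h [Hh Hh2]].
    set (u := Rmin (tau + h/2) t1).
    assert (u <= tau + h/2) by apply Rmin_l.
    assert (u <= t1) by apply Rmin_r.
    assert (tau < u) by (unfold u; apply Rmin_glb_lt; lra).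
    assert (E u).
    { split; [lra|]. intros s Hs. destruct (Rle_lt_dec s tau).
      - apply Hupto; lra.
      - apply Hh2; lra. }
    assert (u <= tau) by (apply Hub; auto). lra.
Qed.

Definition tends (f : R -> R) (l : R) :=
  forall eps, 0 < eps -> exists T, forall t, T <= t -> Rabs (f t - l) < eps.
Definition cauchy_inf (f : R -> R) :=
  forall eps, 0 < eps -> exists T, forall s t, T <= s -> T <= t -> Rabs (f s - f t) < eps.

Lemma tends_cauchy f l : tends f l -> cauchy_inf f.
Proof.
  intros H e He. destruct (H (e/2) ltac:(lra)) as [T HT]. exists T. intros s t Hs Ht.
  specialize (HT s Hs) as H1. specialize (HT t Ht) as H2.
  replace (f s - f t) with ((f s - l) - (f t - l)) by ring.
  eapply Rle_lt_trans; [apply Rabs_triang|]. rewrite Rabs_Ropp. lra.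
Qed.

Lemma mono_cauchy (V : R -> R) a lb :
  (forall s t, a <= s <= t -> V t <= V s) -> (forall t, a <= t -> lb <= V t) ->
  cauchy_inf V.
Proof.
  intros Hm Hlb e He.
  set (E := fun y => exists t, a <= t /\ y = - V t).
  assert (Hb : bound E) by (exists (- lb); intros y [t [Ht ->]]; specialize (Hlb t Ht); lra).
  assert (Hne : exists y, E y) by (exists (- V a); exists a; split; [lra|auto]).
  destruct (completeness E Hb Hne) as [M [Hub Hlub]].
  assert (Hex : exists t0, a <= t0 /\ M - e < - V t0).
  { apply NNPP. intro N.
    assert (M <= M - e); [|lra]. apply Hlub. intros y [t [Ht ->]].
    apply Rnot_lt_le. intro Hlt. apply N. exists t; split; auto. }
  destruct Hex as [t0 [Ht0 Ht0']]. exists t0. intros s t Hs Ht.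
  assert (- V s <= M) by (apply Hub; exists s; split; [lra|auto]).
  assert (- V t <= M) by (apply Hub; exists t; split; [lra|auto]).
  assert (V s <= V t0) by (apply Hm; lra).
  assert (V t <= V t0) by (apply Hm; lra).
  apply Rabs_def1; lra.
Qed.

Lemma tends_ext f g l T0 : (forall t, T0 <= t -> f t = g t) -> tends f l -> tends g l.
Proof.
  intros E H e He. destruct (H e He) as [T HT]. exists (Rmax T T0). intros t Ht.
  rewrite <- E. apply HT. pose proof (Rmax_l T T0); lra. pose proof (Rmax_r T T0); lra.
Qed.
Lemma tends_plus f g a b : tends f a -> tends g b -> tends (fun t => f t + g t) (a + b).
Proof.
  intros Hf Hg e He. destruct (Hf (e/2) ltac:(lra)) as [T1 H1].
  destruct (Hg (e/2) ltac:(lra)) as [T2 H2]. exists (Rmax T1 T2). intros t Ht.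
  specialize (H1 t ltac:(pose proof (Rmax_l T1 T2); lra)).
  specialize (H2 t ltac:(pose proof (Rmax_r T1 T2); lra)).
  replace (f t + g t - (a + b)) with ((f t - a) + (g t - b)) by ring.
  eapply Rle_lt_trans; [apply Rabs_triang|]. lra.
Qed.
Lemma tends_const c : tends (fun _ => c) c.
Proof. intros e He; exists 0; intros; rewrite Rminus_diag, Rabs_R0; auto. Qed.
Lemma tends_bmult f g B T0 : tends f 0 -> (forall t, T0 <= t -> Rabs (g t) <= B) ->
  tends (fun t => g t * f t) 0.
Proof.
  intros Hf Hg e He.
  assert (HB : 0 <= B) by (specialize (Hg T0 (Rle_refl _)); pose proof (Rabs_pos (g T0)); lra).
  destruct (Hf (e / (B + 1)) ltac:(apply Rdiv_lt_0_compat; lra)) as [T HT].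
  exists (Rmax T T0). intros t Ht.
  specialize (HT t ltac:(pose proof (Rmax_l T T0); lra)).
  specialize (Hg t ltac:(pose proof (Rmax_r T T0); lra)).
  rewrite Rminus_0_r in *. rewrite Rabs_mult.
  pose proof (Rabs_pos (g t)); pose proof (Rabs_pos (f t)).
  apply Rle_lt_trans with ((B+1) * Rabs (f t)). apply Rmult_le_compat_r; lra.
  apply Rlt_le_trans with ((B+1) * (e / (B+1))). apply Rmult_lt_compat_l; lra.
  right; field; lra.
Qed.
Lemma tends_scal c f : tends f 0 -> tends (fun t => c * f t) 0.
Proof. intro H. apply (tends_bmult f (fun _ => c) (Rabs c) 0 H). intros; lra. Qed.
Lemma tends_dom f g T0 : tends f 0 -> (forall t, T0 <= t -> Rabs (g t) <= Rabs (f t)) -> tends g 0.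
Proof.
  intros Hf Hd e He. destruct (Hf e He) as [T HT]. exists (Rmax T T0). intros t Ht.
  specialize (HT t ltac:(pose proof (Rmax_l T T0); lra)).
  specialize (Hd t ltac:(pose proof (Rmax_r T T0); lra)).
  rewrite Rminus_0_r in *. lra.
Qed.
Lemma tends_shift f l : tends f l -> tends (fun t => f t - l) 0.
Proof. intros H e He. destruct (H e He) as [T HT]; exists T; intros; rewrite Rminus_0_r; auto. Qed.
Lemma tends_unshift f l : tends (fun t => f t - l) 0 -> tends f l.
Proof. intros H e He. destruct (H e He) as [T HT]; exists T; intros t Ht; specialize (HT t Ht); rewrite Rminus_0_r in HT; auto. Qed.
Lemma tends_sq f : tends (fun t => (f t)^2) 0 -> tends f 0.
Proof.
  intros H e He. destruct (H (e*e) ltac:(nra)) as [T HT]. exists T. intros t Ht.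
  specialize (HT t Ht). rewrite Rminus_0_r in *. rewrite Rabs_right in HT by nra.
  apply Rnot_le_lt. intro Hle. pose proof (Rabs_pos (f t)).
  assert (e * e <= Rabs (f t) * Rabs (f t)) by nra.
  rewrite <- Rabs_mult in H1. rewrite Rabs_right in H1 by nra. nra.
Qed.

Lemma barb1 F h dh a K :
  (forall t, a <= t -> derivable_pt_lim F t (h t)) ->
  (forall t, a <= t -> derivable_pt_lim h t (dh t)) ->
  (forall t, a <= t -> Rabs (dh t) <= K) ->
  cauchy_inf F -> tends h 0.
Proof.
  intros HF Hh HK HC e He.
  assert (HK0 : 0 <= K) by (specialize (HK a (Rle_refl _)); pose proof (Rabs_pos (dh a)); lra).
  set (del := e / (2 * (K + 1))).
  assert (Hdel : 0 < del) by (unfold del; apply Rdiv_lt_0_compat; lra).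
  assert (HKd : K * del < e / 2).
  { assert ((K+1)*del = e/2) by (unfold del; field; lra). nra. }
  assert (0 < e * del) by (apply Rmult_lt_0_compat; lra).
  destruct (HC (e * del / 2) ltac:(lra)) as [T0 HT0].
  exists (Rmax a T0). intros t Ht.
  assert (Hat : a <= t) by (pose proof (Rmax_l a T0); lra).
  assert (HTt : T0 <= t) by (pose proof (Rmax_r a T0); lra).
  rewrite Rminus_0_r. apply Rnot_le_lt. intro Hge.
  assert (Hclose : forall s, t <= s <= t + del -> Rabs (h s - h t) < e / 2).
  { intros s Hs. eapply Rle_lt_trans.
    apply (mvt_abs h dh t s K); [lra| intros; apply Hh; lra | intros; apply HK; lra].
    apply Rle_lt_trans with (K * del); [apply Rmult_le_compat_l; lra | lra]. }
  specialize (HT0 (t + del) t ltac:(lra) HTt).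
  unfold Rabs in Hge. destruct (Rcase_abs (h t)).
  - assert (F (t + del) - F t <= (- e / 2) * (t + del - t)).
    { apply (mvt_ub F h); [lra| intros; apply HF; lra|].
      intros c Hc. specialize (Hclose c ltac:(lra)). apply Rabs_lt_between in Hclose. lra. }
    apply Rabs_lt_between in HT0. nra.
  - assert ((e / 2) * (t + del - t) <= F (t + del) - F t).
    { apply (mvt_lb F h); [lra| intros; apply HF; lra|].
      intros c Hc. specialize (Hclose c ltac:(lra)). apply Rabs_lt_between in Hclose. lra. }
    apply Rabs_lt_between in HT0. nra.
Qed.

Lemma barb2 V v G dG a K c :
  0 < c ->
  (forall t, a <= t -> derivable_pt_lim V t (v t)) ->
  (forall t, a <= t -> v t <= - c * G t) ->
  (forall t, a <= t -> 0 <= G t) ->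
  (forall t, a <= t -> derivable_pt_lim G t (dG t)) ->
  (forall t, a <= t -> Rabs (dG t) <= K) ->
  cauchy_inf V -> tends G 0.
Proof.
  intros Hc HV Hv HG0 HG HK HC e He.
  assert (HK0 : 0 <= K) by (specialize (HK a (Rle_refl _)); pose proof (Rabs_pos (dG a)); lra).
  set (del := e / (2 * (K + 1))).
  assert (Hdel : 0 < del) by (unfold del; apply Rdiv_lt_0_compat; lra).
  assert (HKd : K * del < e / 2).
  { assert ((K+1)*del = e/2) by (unfold del; field; lra). nra. }
  destruct (HC (c * e * del / 2) ltac:(assert (0 < c * e) by nra; nra)) as [T0 HT0].
  exists (Rmax a T0). intros t Ht.
  assert (Hat : a <= t) by (pose proof (Rmax_l a T0); lra).
  assert (HTt : T0 <= t) by (pose proof (Rmax_r a T0); lra).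
  rewrite Rminus_0_r. apply Rnot_le_lt. intro Hge.
  rewrite Rabs_right in Hge by (apply Rle_ge, HG0; lra).
  assert (Hclose : forall s, t <= s <= t + del -> Rabs (G s - G t) < e / 2).
  { intros s Hs. eapply Rle_lt_trans.
    apply (mvt_abs G dG t s K); [lra| intros; apply HG; lra | intros; apply HK; lra].
    apply Rle_lt_trans with (K * del); [apply Rmult_le_compat_l; lra | lra]. }
  specialize (HT0 (t + del) t ltac:(lra) HTt).
  assert (V (t + del) - V t <= (- c * (e / 2)) * (t + del - t)).
  { apply (mvt_ub V v); [lra| intros; apply HV; lra|].
    intros s Hs. specialize (Hclose s ltac:(lra)). apply Rabs_lt_between in Hclose.
    specialize (Hv s ltac:(lra)). nra. }
  apply Rabs_lt_between in HT0. nra.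
Qed.

Lemma elin e r a mu rho : 0 < mu ->
  (forall t, a <= t -> derivable_pt_lim e t (r t - mu * e t)) ->
  (forall t, a <= t -> Rabs (r t) <= rho) ->
  forall t, a <= t -> Rabs (e t) <= rho / mu + Rabs (e a) * exp (- mu * (t - a)).
Proof.
  intros Hmu He Hr t Ht.
  assert (Hrho : 0 <= rho) by (specialize (Hr a (Rle_refl _)); pose proof (Rabs_pos (r a)); lra).
  assert (Hexp : forall k s, derivable_pt_lim (fun u => exp (k * (u - a))) s (exp (k * (s - a)) * k)).
  { intros k s. apply (dpl_exp (fun u => k * (u - a))).
    apply (dpl_eqd _ _ (k * (1 - 0))); [ring|]. apply dpl_scal. apply dpl_minus; [apply dpl_id|apply dpl_const]. }
  assert (E1 : exp (mu * (t - a)) * exp (- mu * (t - a)) = 1).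
  { rewrite <- exp_plus. replace (mu * (t - a) + - mu * (t - a)) with 0 by ring. apply exp_0. }
  assert (Hp1 : 0 < exp (mu * (t - a))) by apply exp_pos.
  assert (Hp2 : 0 < exp (- mu * (t - a))) by apply exp_pos.
  assert (Ea : exp (mu * (a - a)) = 1) by (rewrite Rminus_diag, Rmult_0_r; apply exp_0).
  assert (U : (e t - rho / mu) * exp (mu * (t - a)) - (e a - rho / mu) * exp (mu * (a - a)) <= 0 * (t - a)).
  { apply (mvt_ub (fun u => (e u - rho / mu) * exp (mu * (u - a)))
                  (fun u => (r u - rho) * exp (mu * (u - a)))); [lra| |].
    - intros c Hc. apply (dpl_eqd _ _ ((r c - mu * e c - 0) * exp (mu * (c - a)) + (e c - rho / mu) * (exp (mu * (c - a)) * mu))).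
      field; lra. apply (dpl_mult (fun u => e u - rho / mu) (fun u => exp (mu * (u - a)))); [apply (dpl_minus e (fun _ => rho / mu)); [apply He; lra| apply dpl_const] | apply Hexp].
    - intros c Hc. specialize (Hr c ltac:(lra)). apply Rabs_le_between in Hr.
      pose proof (exp_pos (mu * (c - a))). nra. }
  assert (L : (e t + rho / mu) * exp (mu * (t - a)) - (e a + rho / mu) * exp (mu * (a - a)) >= 0 * (t - a)).
  { apply Rle_ge. apply (mvt_lb (fun u => (e u + rho / mu) * exp (mu * (u - a)))
                  (fun u => (r u + rho) * exp (mu * (u - a)))); [lra| |].
    - intros c Hc. apply (dpl_eqd _ _ ((r c - mu * e c + 0) * exp (mu * (c - a)) + (e c + rho / mu) * (exp (mu * (c - a)) * mu))).
      field; lra. apply (dpl_mult (fun u => e u + rho / mu) (fun u => exp (mu * (u - a)))); [apply (dpl_plus e (fun _ => rho / mu)); [apply He; lra| apply dpl_const] | apply Hexp].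
    - intros c Hc. specialize (Hr c ltac:(lra)). apply Rabs_le_between in Hr.
      pose proof (exp_pos (mu * (c - a))). nra. }
  rewrite Ea in U, L.
  assert (HU : e t - rho / mu <= (e a - rho / mu) * exp (- mu * (t - a))).
  { apply Rmult_le_reg_r with (exp (mu * (t - a))); auto.
    replace ((e a - rho / mu) * exp (- mu * (t - a)) * exp (mu * (t - a))) with (e a - rho / mu) by (rewrite Rmult_assoc, (Rmult_comm (exp (- mu * (t - a)))), E1; ring). lra. }
  assert (HL : (e a + rho / mu) * exp (- mu * (t - a)) <= e t + rho / mu).
  { apply Rmult_le_reg_r with (exp (mu * (t - a))); auto.
    replace ((e a + rho / mu) * exp (- mu * (t - a)) * exp (mu * (t - a))) with (e a + rho / mu) by (rewrite Rmult_assoc, (Rmult_comm (exp (- mu * (t - a)))), E1; ring). lra. }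
  assert (0 <= rho / mu) by (apply Rmult_le_pos; [lra| left; apply Rinv_0_lt_compat; lra]).
  pose proof (Rabs_pos (e a)). assert (Hea := Rabs_le_between (e a) (Rabs (e a)) (Rle_refl _)).
  apply Rabs_le. split; nra.
Qed.

Lemma exp_neg_small k s : 0 < k -> 0 <= s -> exp (- k * s) <= 1 / (1 + k * s).
Proof.
  intros Hk Hs. pose proof (exp_ineq1_le (k * s)).
  assert (E : exp (- k * s) * exp (k * s) = 1).
  { rewrite <- exp_plus. replace (- k * s + k * s) with 0 by ring. apply exp_0. }
  pose proof (exp_pos (- k * s)).
  apply Rmult_le_reg_r with (1 + k * s). nra.
  replace (1 / (1 + k * s) * (1 + k * s)) with 1 by (field; nra). nra.
Qed.

Lemma elin_tends e r a mu : 0 < mu ->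
  (forall t, a <= t -> derivable_pt_lim e t (r t - mu * e t)) ->
  tends r 0 -> tends e 0.
Proof.
  intros Hmu He Hr eps Heps.
  destruct (Hr (mu * eps / 4) ltac:(nra)) as [T1 HT1].
  set (a1 := Rmax a T1).
  assert (Ha1 : a <= a1) by apply Rmax_l. assert (Ha1' : T1 <= a1) by apply Rmax_r.
  assert (Hb := elin e r a1 mu (mu * eps / 4) Hmu
    ltac:(intros; apply He; lra) ltac:(intros t Ht; specialize (HT1 t ltac:(lra)); rewrite Rminus_0_r in HT1; lra)).
  set (B := Rabs (e a1)). assert (HB : 0 <= B) by apply Rabs_pos.
  exists (a1 + 4 * (B + 1) / (mu * eps)). intros t Ht. rewrite Rminus_0_r.
  assert (Hq : 0 <= 4 * (B + 1) / (mu * eps)) by (apply Rmult_le_pos; [lra| left; apply Rinv_0_lt_compat; nra]).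
  specialize (Hb t ltac:(lra)).
  assert (Hx := exp_neg_small mu (t - a1) Hmu ltac:(lra)).
  replace (mu * eps / 4 / mu) with (eps / 4) in Hb by (field; lra).
  assert (B * exp (- mu * (t - a1)) <= eps / 2).
  { apply Rle_trans with (B * (1 / (1 + mu * (t - a1)))). apply Rmult_le_compat_l; auto.
    assert (mu * (t - a1) >= mu * (4 * (B + 1) / (mu * eps))) by (apply Rle_ge, Rmult_le_compat_l; lra).
    replace (mu * (4 * (B + 1) / (mu * eps))) with (4 * (B+1) / eps) in H by (field; lra).
    assert (4 * (B + 1) / eps * eps = 4 * (B+1)) by (field; lra).
    assert (1 + mu * (t - a1) > 0) by nra.
    replace (B * (1 / (1 + mu * (t - a1)))) with (B / (1 + mu * (t - a1))) by (field; lra).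
    apply Rmult_le_reg_r with (1 + mu * (t - a1)); auto.
    replace (B / (1 + mu * (t - a1)) * (1 + mu * (t - a1))) with B by (field; lra).
    assert (eps / 2 * (1 + mu * (t - a1)) >= eps / 2 * (4 * (B + 1) / eps)) by (apply Rle_ge, Rmult_le_compat_l; lra).
    replace (eps / 2 * (4 * (B + 1) / eps)) with (2 * (B+1)) in H2 by (field; lra). lra. }
  unfold B in *; lra.
Qed.

Definition gf (u : R) := u - 1 - ln u.

Lemma ln_le_sub1 u : 0 < u -> ln u <= u - 1.
Proof. intro Hu. pose proof (exp_ineq1_le (ln u)). rewrite exp_ln in H; lra. Qed.
Lemma ln_lt_sub1 u : 0 < u -> u <> 1 -> ln u < u - 1.
Proof.
  intros Hu Hne. assert (ln u <> 0).
  { intro H0. apply Hne. rewrite <- (exp_ln u Hu), H0. apply exp_0. }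
  pose proof (exp_ineq1 (ln u) H). rewrite exp_ln in H0; lra.
Qed.
Lemma gf_nonneg u : 0 < u -> 0 <= gf u.
Proof. intro; unfold gf; pose proof (ln_le_sub1 u H); lra. Qed.
Lemma gf_pos u : 0 < u -> u <> 1 -> 0 < gf u.
Proof. intros; unfold gf; pose proof (ln_lt_sub1 u H H0); lra. Qed.
Lemma gf_1 : gf 1 = 0.
Proof. unfold gf; rewrite ln_1; ring. Qed.
Lemma ln_ge u : 0 < u -> 1 - / u <= ln u.
Proof.
  intro Hu. pose proof (ln_le_sub1 (/ u) ltac:(apply Rinv_0_lt_compat; lra)).
  rewrite ln_Rinv in H by lra. lra.
Qed.
Lemma gf_upper u : 0 < u -> gf u <= (u - 1)^2 / u.
Proof.
  intro Hu. unfold gf. pose proof (ln_ge u Hu).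
  replace ((u - 1)^2 / u) with (u - 1 - (1 - / u)) by (field; lra). lra.
Qed.
Lemma gf_upper2 u : 1/2 <= u -> gf u <= 2 * (u - 1)^2.
Proof.
  intro Hu. eapply Rle_trans; [apply gf_upper; lra|].
  apply Rmult_le_reg_r with u; [lra|].
  replace ((u - 1)^2 / u * u) with ((u-1)^2) by (field; lra). pose proof (pow2_ge_0 (u-1)). assert (0 <= (u-1)^2 * (2*u-1)) by (apply Rmult_le_pos; lra). nra.
Qed.
Lemma gf_hi u K : 0 < u -> gf u <= K -> u <= 2 * (K + 1).
Proof.
  intros Hu Hg. unfold gf in Hg.
  assert (Hs : 0 < sqrt u) by (apply sqrt_lt_R0; lra).
  assert (Hl : ln u = 2 * ln (sqrt u)).
  { rewrite <- (sqrt_sqrt u) at 1 by lra. rewrite ln_mult by lra. ring. }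
  pose proof (ln_le_sub1 (sqrt u) Hs).
  pose proof (sqrt_sqrt u ltac:(lra)).
  pose proof (pow2_ge_0 (sqrt u - 2)). assert (ln u <= u / 2) by nra. lra.
Qed.
Lemma gf_lo u K : 0 < u -> gf u <= K -> exp (- (K + 1)) <= u.
Proof.
  intros Hu Hg. unfold gf in Hg.
  assert (- (K+1) <= ln u) by lra.
  rewrite <- (exp_ln u Hu). destruct H as [H|H]; [left; apply exp_increasing; auto| rewrite H; lra].
Qed.
Lemma gf_mono_r u v : 1 <= u -> u <= v -> gf u <= gf v.
Proof.
  intros Hu Huv. unfold gf.
  assert (ln v = ln u + ln (v / u)).
  { rewrite <- ln_mult by (try apply Rdiv_lt_0_compat; lra). f_equal. field. lra. }
  pose proof (ln_le_sub1 (v / u) ltac:(apply Rdiv_lt_0_compat; lra)).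
  assert (u * (v / u - 1) = v - u) by (field; lra).
  assert (v / u - 1 >= 0).
  { apply Rge_minus. apply Rle_ge. apply Rmult_le_reg_r with u; [lra|].
    replace (v / u * u) with v by (field; lra). lra. }
  nra.
Qed.
Lemma gf_mono_l u v : 0 < u -> u <= v -> v <= 1 -> gf v <= gf u.
Proof.
  intros Hu Huv Hv. unfold gf.
  assert (ln u = ln v + ln (u / v)).
  { rewrite <- ln_mult by (try apply Rdiv_lt_0_compat; lra). f_equal. field. lra. }
  pose proof (ln_le_sub1 (u / v) ltac:(apply Rdiv_lt_0_compat; lra)).
  assert (v * (u / v - 1) = u - v) by (field; lra).
  assert (u / v - 1 <= 0).
  { apply Rle_minus. apply Rmult_le_reg_r with v; [lra|].
    replace (u / v * v) with u by (field; lra). lra. }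
  nra.
Qed.
Lemma gf_small r u : 0 < r < 1 -> 0 < u -> gf u < Rmin (gf (1 - r)) (gf (1 + r)) -> Rabs (u - 1) < r.
Proof.
  intros Hr Hu Hg. pose proof (Rmin_l (gf (1 - r)) (gf (1 + r))).
  pose proof (Rmin_r (gf (1 - r)) (gf (1 + r))).
  apply Rabs_def1.
  - apply Rnot_le_lt; intro. pose proof (gf_mono_r (1 + r) u ltac:(lra) ltac:(lra)). lra.
  - apply Rnot_le_lt; intro. pose proof (gf_mono_l u (1 - r) Hu ltac:(lra) ltac:(lra)). lra.
Qed.
Lemma gf_min_pos r : 0 < r < 1 -> 0 < Rmin (gf (1 - r)) (gf (1 + r)).
Proof. intros. apply Rmin_pos; apply gf_pos; lra. Qed.

Lemma amgm3 a b c : 0 < a -> 0 < b -> 0 < c -> a * b * c = 1 -> 0 <= a + b + c - 3.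
Proof.
  intros. pose proof (ln_le_sub1 a H). pose proof (ln_le_sub1 b H0). pose proof (ln_le_sub1 c H1).
  assert (ln a + ln b + ln c = 0).
  { rewrite <- !ln_mult by (try apply Rmult_lt_0_compat; lra). rewrite H2. apply ln_1. }
  lra.
Qed.

Lemma dpl_gf f t d K : 0 < K -> derivable_pt_lim f t d -> 0 < f t ->
  derivable_pt_lim (fun s => K * gf (f s / K)) t ((1 - K / f t) * d).
Proof.
  intros HK Hd Hp. unfold gf.
  assert (Hq : 0 < f t / K) by (apply Rdiv_lt_0_compat; lra).
  assert (H1 : derivable_pt_lim (fun s => f s / K) t (d * / K)).
  { apply (dpl_eqd _ _ (d * (fun _ => / K) t + f t * 0)); [simpl; ring|].
    exact (dpl_mult f (fun _ => / K) t d 0 Hd (dpl_const _ _)). }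
  apply (dpl_eqd _ _ (K * ((d * / K) - 0 - / (f t / K) * (d * / K)))).
  field; lra.
  apply dpl_scal. apply dpl_minus. apply dpl_minus. exact H1. apply dpl_const.
  apply (dpl_ln (fun s => f s / K)); auto.
Qed.

Ltac pos := repeat (match goal with
  | |- 0 < _ + _ => first [solve [lra] | apply Rplus_lt_0_compat]
  | |- 0 < _ * _ => apply Rmult_lt_0_compat
  | |- 0 < _ / _ => apply Rdiv_lt_0_compat
  | |- 0 < / _ => apply Rinv_0_lt_compat
  end); try lra.

Lemma fS_eq P q : fS P q = Lam P - beta1 P * (sI q + etaC P * sC q + etaA P * sA q) * sS q - (mu P + psi P) * sS q.
Proof. reflexivity. Qed.
Lemma fI_eq P q : fI P q = beta1 P * (sI q + etaC P * sC q + etaA P * sA q) * sS q - xi3 P * sI q + alpha P * sA q + omega P * sC q.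
Proof. reflexivity. Qed.
Lemma fC_eq P q : fC P q = phi P * sI q - xi2 P * sC q.
Proof. reflexivity. Qed.
Lemma fA_eq P q : fA P q = rho P * sI q - xi1 P * sA q.
Proof. reflexivity. Qed.
Lemma fE_eq P q : fE P q = psi P * sS q - mu P * sE q.
Proof. reflexivity. Qed.
Lemma xi_eqs P : xi1 P = alpha P + mu P /\ xi2 P = omega P + mu P /\ xi3 P = rho P + phi P + mu P.
Proof. repeat split; reflexivity. Qed.

Definition Sb P := mu P * (xi1 P * (phi P + xi2 P) + rho P * xi2 P)
           / (beta1 P * (xi1 P * (xi2 P + etaC P * phi P) + etaA P * rho P * xi2 P)).
Definition Tk P := 1 + etaC P * phi P / xi2 P + etaA P * rho P / xi1 P.
Definition Ib P := (Lam P - (mu P + psi P) * Sb P) / (beta1 P * Tk P * Sb P).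
Definition Cb P := phi P * Ib P / xi2 P.
Definition Ab P := rho P * Ib P / xi1 P.
Definition Eb P := psi P * Sb P / mu P.
Definition pe P := mkState (Sb P) (Ib P) (Cb P) (Ab P) (Eb P).
Definition cw P := (beta1 P * etaC P * Sb P + omega P) / xi2 P.
Definition aw P := (beta1 P * etaA P * Sb P + alpha P) / xi1 P.

Definition hypP P := 0 < Lam P /\ 0 < mu P /\ 0 < beta P /\ 0 < rho P /\ 0 < phi P /\
  0 < alpha P /\ 0 < omega P /\ 0 <= psi P /\ 0 < etaC P /\ 0 < etaA P /\
  (mu P + psi P) * Sb P < Lam P.

Lemma hyp_of P : 0 < Lam P -> 0 < mu P -> 0 < beta P -> 0 < rho P -> 0 < phi P ->
  0 < alpha P -> 0 < omega P -> 0 <= psi P -> 0 < etaC P -> 1 <= etaA P ->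
  repro_number P > 1 -> hypP P.
Proof.
  intros. unfold hypP. repeat (split; [lra|]).
  destruct (xi_eqs P) as [E1 [E2 E3]].
  assert (Hb : 0 < beta1 P) by (unfold beta1; simpl; apply Rdiv_lt_0_compat; nra).
  assert (Hx1 : 0 < xi1 P) by lra. assert (Hx2 : 0 < xi2 P) by lra.
  set (N := xi2 P * (xi1 P + rho P * etaA P) + etaC P * phi P * xi1 P).
  set (D := xi2 P * (rho P + xi1 P) + phi P * xi1 P).
  assert (HN : 0 < N) by (unfold N; pos). assert (HD : 0 < D) by (unfold D; pos).
  assert (HS : Sb P = mu P * D / (beta1 P * N)).
  { unfold Sb, N, D. f_equal; [ring|ring]. }
  assert (HR : repro_number P = Lam P * beta1 P * N / ((mu P + psi P) * mu P * D)) by reflexivity.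
  rewrite HR in H9. rewrite HS.
  assert (Hden : 0 < (mu P + psi P) * mu P * D) by (apply Rmult_lt_0_compat; [apply Rmult_lt_0_compat|]; lra).
  apply Rmult_lt_reg_r with (beta1 P * N); [nra|].
  replace ((mu P + psi P) * (mu P * D / (beta1 P * N)) * (beta1 P * N)) with ((mu P + psi P) * mu P * D) by (field; nra).
  apply Rmult_lt_reg_r with (/ ((mu P + psi P) * mu P * D)). apply Rinv_0_lt_compat; auto.
  rewrite Rinv_r by lra.
  replace (Lam P * (beta1 P * N) * / ((mu P + psi P) * mu P * D)) with (Lam P * beta1 P * N / ((mu P + psi P) * mu P * D)) by (field; lra).
  lra.
Qed.

Lemma basics P : hypP P -> 0 < beta1 P /\ 0 < xi1 P /\ 0 < xi2 P /\ 0 < xi3 P /\ 0 < Tk P /\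
  0 < Sb P /\ 0 < Ib P /\ 0 < Cb P /\ 0 < Ab P /\ 0 <= Eb P /\ 0 < cw P /\ 0 < aw P.
Proof.
  intros (HL & Hm & Hb & Hr & Hp & Ha & Ho & Hps & HeC & HeA & HR).
  destruct (xi_eqs P) as [E1 [E2 E3]].
  assert (Hb1 : 0 < beta1 P) by (unfold beta1; simpl; apply Rdiv_lt_0_compat; nra).
  assert (Hx1 : 0 < xi1 P) by lra. assert (Hx2 : 0 < xi2 P) by lra. assert (Hx3 : 0 < xi3 P) by lra.
  assert (HT : 0 < Tk P).
  { unfold Tk. assert (0 < etaC P * phi P / xi2 P) by (apply Rdiv_lt_0_compat; nra).
    assert (0 < etaA P * rho P / xi1 P) by (apply Rdiv_lt_0_compat; nra). lra. }
  assert (HS : 0 < Sb P).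
  { unfold Sb. pos. }
  assert (HI : 0 < Ib P).
  { unfold Ib. apply Rdiv_lt_0_compat. lra. apply Rmult_lt_0_compat; [apply Rmult_lt_0_compat|]; lra. }
  assert (HC : 0 < Cb P) by (unfold Cb; apply Rdiv_lt_0_compat; nra).
  assert (HA : 0 < Ab P) by (unfold Ab; apply Rdiv_lt_0_compat; nra).
  assert (HE : 0 <= Eb P) by (unfold Eb; apply Rmult_le_pos; [nra| left; apply Rinv_0_lt_compat; lra]).
  assert (Hcw : 0 < cw P).
  { unfold cw. apply Rdiv_lt_0_compat; [|lra]. assert (0 < beta1 P * etaC P * Sb P) by pos. lra. }
  assert (Haw : 0 < aw P).
  { unfold aw. apply Rdiv_lt_0_compat; [|lra]. assert (0 < beta1 P * etaA P * Sb P) by pos. lra. }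
  tauto.
Qed.

Lemma eq_rels P : hypP P ->
  Lam P - beta1 P * (Ib P + etaC P * Cb P + etaA P * Ab P) * Sb P - (mu P + psi P) * Sb P = 0 /\
  beta1 P * (Ib P + etaC P * Cb P + etaA P * Ab P) * Sb P - xi3 P * Ib P + alpha P * Ab P + omega P * Cb P = 0 /\
  phi P * Ib P - xi2 P * Cb P = 0 /\ rho P * Ib P - xi1 P * Ab P = 0 /\
  psi P * Sb P - mu P * Eb P = 0.
Proof.
  intro H. pose proof (basics P H) as (Hb1 & Hx1 & Hx2 & Hx3 & HT & HS & HI & HC & HA & _).
  destruct H as (HL & Hm & Hb & Hr & Hp & Ha & Ho & Hps & HeC & HeA & HR).
  destruct (xi_eqs P) as [E1 [E2 E3]].
  assert (HTI : Ib P + etaC P * Cb P + etaA P * Ab P = Ib P * Tk P) by (unfold Cb, Ab, Tk; field; lra).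
  rewrite HTI.
  assert (K1 : beta1 P * Tk P * Sb P = xi3 P - alpha P * rho P / xi1 P - omega P * phi P / xi2 P).
  { unfold Tk, Sb. rewrite E3.
    assert (0 < xi1 P * (xi2 P + etaC P * phi P) + etaA P * rho P * xi2 P) by pos.
    field_simplify_eq; [| repeat split; lra].
    rewrite E1, E2. ring. }
  repeat split.
  - unfold Ib. field. split; lra.
  - replace (beta1 P * (Ib P * Tk P) * Sb P) with (Ib P * (beta1 P * Tk P * Sb P)) by ring.
    rewrite K1. unfold Ab, Cb. field. lra.
  - unfold Cb. field. lra.
  - unfold Ab. field. lra.
  - unfold Eb. field. lra.
Qed.

Lemma solve_div a k c : 0 < k -> a*k = c -> a = c/k.
Proof. intros Hk H. subst c. field. lra. Qed.

Lemma lyap_id L b m x1 x2 x3 al om ph rh eC eA Sb Ib Cb Ab S I C A :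
  0 < Sb -> 0 < Ib -> 0 < Cb -> 0 < Ab -> 0 < S -> 0 < I -> 0 < C -> 0 < A ->
  0 < x1 -> 0 < x2 ->
  L - b*(Ib+eC*Cb+eA*Ab)*Sb - m*Sb = 0 ->
  b*(Ib+eC*Cb+eA*Ab)*Sb - x3*Ib + al*Ab + om*Cb = 0 ->
  ph*Ib - x2*Cb = 0 -> rh*Ib - x1*Ab = 0 ->
  (1 - Sb/S)*(L - b*(I+eC*C+eA*A)*S - m*S)
  + (1 - Ib/I)*(b*(I+eC*C+eA*A)*S - x3*I + al*A + om*C)
  + (b*eC*Sb+om)/x2*((1-Cb/C)*(ph*I - x2*C))
  + (b*eA*Sb+al)/x1*((1-Ab/A)*(rh*I - x1*A))
  = - ( m*(S-Sb)^2/S + b*Ib*Sb*(S/Sb + 1/(S/Sb) - 2)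
      + b*eC*Cb*Sb*(1/(S/Sb) + (S/Sb)*(C/Cb)/(I/Ib) + (I/Ib)/(C/Cb) - 3)
      + b*eA*Ab*Sb*(1/(S/Sb) + (S/Sb)*(A/Ab)/(I/Ib) + (I/Ib)/(A/Ab) - 3)
      + om*Cb*((C/Cb)/(I/Ib)+(I/Ib)/(C/Cb)-2) + al*Ab*((A/Ab)/(I/Ib)+(I/Ib)/(A/Ab)-2)).
Proof.
intros.
assert (HL: L = b*(Ib+eC*Cb+eA*Ab)*Sb + m*Sb) by lra.
assert (Hx3: x3 = (b*(Ib+eC*Cb+eA*Ab)*Sb + al*Ab + om*Cb)/Ib) by (apply solve_div; lra).
assert (Hph: ph = x2*Cb/Ib) by (apply solve_div; lra).
assert (Hrh: rh = x1*Ab/Ib) by (apply solve_div; lra).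
subst L x3 ph rh. field. repeat split; lra.
Qed.

Definition Vr P S I C A := Sb P * gf (S / Sb P) + Ib P * gf (I / Ib P)
  + cw P * (Cb P * gf (C / Cb P)) + aw P * (Ab P * gf (A / Ab P)).
Definition Vdr P S I C A dS dI dC dA := (1 - Sb P / S) * dS + (1 - Ib P / I) * dI
  + cw P * ((1 - Cb P / C) * dC) + aw P * ((1 - Ab P / A) * dA).
Definition Gr P S I C A := (S - Sb P) * (S - Sb P) + (C / Cb P - I / Ib P) * (C / Cb P - I / Ib P)
  + (A / Ab P - I / Ib P) * (A / Ab P - I / Ib P).
Definition c0 P M := Rmin ((mu P + psi P) / M)
  (Rmin (omega P * Cb P * (Ib P * Cb P) / (M * M)) (alpha P * Ab P * (Ib P * Ab P) / (M * M))).

Definition posq (q : State) := 0 < sS q /\ 0 < sI q /\ 0 < sC q /\ 0 < sA q.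

Lemma sq_div_ge a p k : 0 < p -> 0 <= k -> p * k <= 1 -> k * (a * a) <= a * a / p.
Proof.
  intros Hp Hk Hpk. apply Rmult_le_reg_r with p; auto.
  replace (a * a / p * p) with (a * a) by (field; lra).
  pose proof (Rle_0_sqr a). unfold Rsqr in H. nra.
Qed.

Lemma c0_pos P M : hypP P -> 0 < M -> 0 < c0 P M.
Proof.
  intros H HM. pose proof (basics P H) as (Hb1 & Hx1 & Hx2 & Hx3 & HT & HS & HI & HC & HA & _).
  destruct H as (HL & Hm & Hb & Hr & Hp & Ha & Ho & Hps & HeC & HeA & HR).
  unfold c0. repeat apply Rmin_pos; pos.
Qed.

Lemma Vd_bound P q M : hypP P -> posq q -> sS q <= M -> sI q <= M -> sC q <= M -> sA q <= M ->
  Vdr P (sS q) (sI q) (sC q) (sA q) (fS P q) (fI P q) (fC P q) (fA P q)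
  <= - c0 P M * Gr P (sS q) (sI q) (sC q) (sA q).
Proof.
  intros H [HS0 [HI0 [HC0 HA0]]] HSM HIM HCM HAM.
  pose proof (basics P H) as (Hb1 & Hx1 & Hx2 & Hx3 & HT & HS & HI & HC & HA & _).
  pose proof (eq_rels P H) as (E1 & E2 & E3 & E4 & _).
  pose proof H as (HL & Hm & Hb & Hr & Hp & Ha & Ho & Hps & HeC & HeA & HR).
  assert (HM : 0 < M) by lra.
  unfold Vdr, cw, aw. rewrite fS_eq, fI_eq, fC_eq, fA_eq.
  rewrite (lyap_id (Lam P) (beta1 P) (mu P + psi P) (xi1 P) (xi2 P) (xi3 P) (alpha P) (omega P)
     (phi P) (rho P) (etaC P) (etaA P) (Sb P) (Ib P) (Cb P) (Ab P)) by auto.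
  set (x := sS q / Sb P). set (y := sI q / Ib P). set (z := sC q / Cb P). set (w := sA q / Ab P).
  assert (Hx : 0 < x) by (unfold x; pos). assert (Hy : 0 < y) by (unfold y; pos).
  assert (Hz : 0 < z) by (unfold z; pos). assert (Hw : 0 < w) by (unfold w; pos).
  assert (T1 : 0 <= x + 1 / x - 2).
  { pose proof (amgm3 x (1/x) 1 Hx ltac:(pos) ltac:(lra) ltac:(field; lra)). lra. }
  assert (T2 : 0 <= 1 / x + x * z / y + y / z - 3).
  { apply amgm3; try pos. field. lra. }
  assert (T3 : 0 <= 1 / x + x * w / y + y / w - 3).
  { apply amgm3; try pos. field. lra. }
  assert (Q1 : z / y + y / z - 2 = (z - y) * (z - y) / (y * z)) by (field; lra).
  assert (Q2 : w / y + y / w - 2 = (w - y) * (w - y) / (y * w)) by (field; lra).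
  rewrite Q1, Q2.
  assert (Hc1 : c0 P M <= (mu P + psi P) / M) by apply Rmin_l.
  assert (Hc2 : c0 P M <= omega P * Cb P * (Ib P * Cb P) / (M * M))
    by (eapply Rle_trans; [apply Rmin_r| apply Rmin_l]).
  assert (Hc3 : c0 P M <= alpha P * Ab P * (Ib P * Ab P) / (M * M))
    by (eapply Rle_trans; [apply Rmin_r| apply Rmin_r]).
  assert (Hcp := c0_pos P M H HM).
  assert (A1 : c0 P M * ((sS q - Sb P) * (sS q - Sb P)) <= (mu P + psi P) * (sS q - Sb P) ^ 2 / sS q).
  { replace ((mu P + psi P) * (sS q - Sb P) ^ 2 / sS q) with ((mu P + psi P) * ((sS q - Sb P) * (sS q - Sb P) / sS q)) by (field; lra).
    apply Rle_trans with ((mu P + psi P) * ( / M * ((sS q - Sb P) * (sS q - Sb P)))).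
    - replace ((mu P + psi P) * (/ M * ((sS q - Sb P) * (sS q - Sb P)))) with ((mu P + psi P) / M * ((sS q - Sb P) * (sS q - Sb P))) by (field; lra).
      apply Rmult_le_compat_r; [apply Rle_0_sqr| auto].
    - apply Rmult_le_compat_l; [lra|]. apply sq_div_ge; auto. left; pos.
      apply Rmult_le_reg_r with M; auto. replace (sS q * / M * M) with (sS q) by (field; lra). lra. }
  assert (A2 : c0 P M * ((z - y) * (z - y)) <= omega P * Cb P * ((z - y) * (z - y) / (y * z))).
  { apply Rle_trans with (omega P * Cb P * ((Ib P * Cb P) / (M * M) * ((z - y) * (z - y)))).
    - replace (omega P * Cb P * (Ib P * Cb P / (M * M) * ((z - y) * (z - y)))) with (omega P * Cb P * (Ib P * Cb P) / (M * M) * ((z - y) * (z - y))) by (field; lra).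
      apply Rmult_le_compat_r; [apply Rle_0_sqr| auto].
    - apply Rmult_le_compat_l; [left; pos|]. apply sq_div_ge; [pos| left; pos|].
      unfold y, z. replace (sI q / Ib P * (sC q / Cb P) * (Ib P * Cb P / (M * M))) with (sI q * sC q / (M * M)) by (field; lra).
      apply Rmult_le_reg_r with (M * M); [pos|]. replace (sI q * sC q / (M * M) * (M * M)) with (sI q * sC q) by (field; lra).
      rewrite Rmult_1_l. apply Rmult_le_compat; lra. }
  assert (A3 : c0 P M * ((w - y) * (w - y)) <= alpha P * Ab P * ((w - y) * (w - y) / (y * w))).
  { apply Rle_trans with (alpha P * Ab P * ((Ib P * Ab P) / (M * M) * ((w - y) * (w - y)))).
    - replace (alpha P * Ab P * (Ib P * Ab P / (M * M) * ((w - y) * (w - y)))) with (alpha P * Ab P * (Ib P * Ab P) / (M * M) * ((w - y) * (w - y))) by (field; lra).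
      apply Rmult_le_compat_r; [apply Rle_0_sqr| auto].
    - apply Rmult_le_compat_l; [left; pos|]. apply sq_div_ge; [pos| left; pos|].
      unfold y, w. replace (sI q / Ib P * (sA q / Ab P) * (Ib P * Ab P / (M * M))) with (sI q * sA q / (M * M)) by (field; lra).
      apply Rmult_le_reg_r with (M * M); [pos|]. replace (sI q * sA q / (M * M) * (M * M)) with (sI q * sA q) by (field; lra).
      rewrite Rmult_1_l. apply Rmult_le_compat; lra. }
  unfold Gr. fold x y z w.
  assert (0 <= beta1 P * Ib P * Sb P * (x + 1 / x - 2)) by (apply Rmult_le_pos; [left; pos| auto]).
  assert (0 <= beta1 P * etaC P * Cb P * Sb P * (1 / x + x * z / y + y / z - 3)) by (apply Rmult_le_pos; [left; pos| auto]).
  assert (0 <= beta1 P * etaA P * Ab P * Sb P * (1 / x + x * w / y + y / w - 3)) by (apply Rmult_le_pos; [left; pos| auto]).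
  lra.
Qed.

Lemma Vr_nonneg P S I C A : hypP P -> 0 < S -> 0 < I -> 0 < C -> 0 < A -> 0 <= Vr P S I C A.
Proof.
  intros H HS0 HI0 HC0 HA0. pose proof (basics P H) as (Hb1 & Hx1 & Hx2 & Hx3 & HT & HS & HI & HC & HA & HE & Hcw & Haw).
  unfold Vr.
  assert (0 <= gf (S / Sb P)) by (apply gf_nonneg; pos).
  assert (0 <= gf (I / Ib P)) by (apply gf_nonneg; pos).
  assert (0 <= gf (C / Cb P)) by (apply gf_nonneg; pos).
  assert (0 <= gf (A / Ab P)) by (apply gf_nonneg; pos).
  assert (0 <= Sb P * gf (S / Sb P)) by (apply Rmult_le_pos; lra).
  assert (0 <= Ib P * gf (I / Ib P)) by (apply Rmult_le_pos; lra).
  assert (0 <= cw P * (Cb P * gf (C / Cb P))) by (apply Rmult_le_pos; [lra| apply Rmult_le_pos; lra]).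
  assert (0 <= aw P * (Ab P * gf (A / Ab P))) by (apply Rmult_le_pos; [lra| apply Rmult_le_pos; lra]).
  lra.
Qed.

Lemma dpl_divc f t d K : derivable_pt_lim f t d -> derivable_pt_lim (fun s => f s / K) t (d / K).
Proof.
  intro Hd. apply (dpl_eqd _ _ (d * (fun _ => / K) t + f t * 0)); [unfold Rdiv; simpl; ring|].
  exact (dpl_mult f (fun _ => / K) t d 0 Hd (dpl_const _ _)).
Qed.

Definition dGr P S I C A dS dI dC dA :=
  2 * (S - Sb P) * dS + 2 * (C / Cb P - I / Ib P) * (dC / Cb P - dI / Ib P)
  + 2 * (A / Ab P - I / Ib P) * (dA / Ab P - dI / Ib P).
Definition dfSr P S I C A dS dI dC dA :=
  - (beta1 P * ((dI + etaC P * dC + etaA P * dA) * S + (I + etaC P * C + etaA P * A) * dS))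
  - (mu P + psi P) * dS.

Section Der.
Variables (P : Params) (S I C A : R -> R) (t dS dI dC dA : R).
Hypotheses (HS : derivable_pt_lim S t dS) (HI : derivable_pt_lim I t dI)
  (HC : derivable_pt_lim C t dC) (HA : derivable_pt_lim A t dA).

Lemma dV_lem : hypP P -> 0 < S t -> 0 < I t -> 0 < C t -> 0 < A t ->
  derivable_pt_lim (fun s => Vr P (S s) (I s) (C s) (A s)) t
    (Vdr P (S t) (I t) (C t) (A t) dS dI dC dA).
Proof.
  intros H H1 H2 H3 H4. pose proof (basics P H) as (Hb1 & Hx1 & Hx2 & Hx3 & HT & HSb & HIb & HCb & HAb & _).
  unfold Vr, Vdr.
  apply (dpl_plus (fun s => Sb P * gf (S s / Sb P) + Ib P * gf (I s / Ib P) + cw P * (Cb P * gf (C s / Cb P)))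
                  (fun s => aw P * (Ab P * gf (A s / Ab P)))).
  apply (dpl_plus (fun s => Sb P * gf (S s / Sb P) + Ib P * gf (I s / Ib P))
                  (fun s => cw P * (Cb P * gf (C s / Cb P)))).
  apply (dpl_plus (fun s => Sb P * gf (S s / Sb P)) (fun s => Ib P * gf (I s / Ib P))).
  - apply dpl_gf; auto.
  - apply dpl_gf; auto.
  - apply (dpl_scal (cw P) (fun s => Cb P * gf (C s / Cb P))). apply dpl_gf; auto.
  - apply (dpl_scal (aw P) (fun s => Ab P * gf (A s / Ab P))). apply dpl_gf; auto.
Qed.

Lemma dsq f t0 d : derivable_pt_lim f t0 d -> derivable_pt_lim (fun s => f s * f s) t0 (2 * f t0 * d).
Proof. intro H. apply (dpl_eqd _ _ (d * f t0 + f t0 * d)); [ring|]. exact (dpl_mult f f t0 d d H H). Qed.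

Lemma dG_lem : derivable_pt_lim (fun s => Gr P (S s) (I s) (C s) (A s)) t
    (dGr P (S t) (I t) (C t) (A t) dS dI dC dA).
Proof.
  unfold Gr, dGr.
  assert (H1 : derivable_pt_lim (fun s => S s - Sb P) t (dS - 0)) by (apply (dpl_minus S (fun _ => Sb P)); auto; apply dpl_const).
  assert (H2 : derivable_pt_lim (fun s => C s / Cb P - I s / Ib P) t (dC / Cb P - dI / Ib P))
    by (apply (dpl_minus (fun s => C s / Cb P) (fun s => I s / Ib P)); apply dpl_divc; auto).
  assert (H3 : derivable_pt_lim (fun s => A s / Ab P - I s / Ib P) t (dA / Ab P - dI / Ib P))
    by (apply (dpl_minus (fun s => A s / Ab P) (fun s => I s / Ib P)); apply dpl_divc; auto).
  apply (dpl_eqd _ _ (2 * (S t - Sb P) * (dS - 0) + 2 * (C t / Cb P - I t / Ib P) * (dC / Cb P - dI / Ib P)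
    + 2 * (A t / Ab P - I t / Ib P) * (dA / Ab P - dI / Ib P))); [ring|].
  apply (dpl_plus (fun s => (S s - Sb P) * (S s - Sb P) + (C s / Cb P - I s / Ib P) * (C s / Cb P - I s / Ib P))
     (fun s => (A s / Ab P - I s / Ib P) * (A s / Ab P - I s / Ib P))).
  apply (dpl_plus (fun s => (S s - Sb P) * (S s - Sb P)) (fun s => (C s / Cb P - I s / Ib P) * (C s / Cb P - I s / Ib P))).
  - exact (dsq (fun s => S s - Sb P) t _ H1).
  - exact (dsq (fun s => C s / Cb P - I s / Ib P) t _ H2).
  - exact (dsq (fun s => A s / Ab P - I s / Ib P) t _ H3).
Qed.

Lemma dfS_lem : derivable_pt_lim
  (fun s => Lam P - beta1 P * (I s + etaC P * C s + etaA P * A s) * S s - (mu P + psi P) * S s) t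
  (dfSr P (S t) (I t) (C t) (A t) dS dI dC dA).
Proof.
  unfold dfSr.
  assert (HT : derivable_pt_lim (fun s => I s + etaC P * C s + etaA P * A s) t (dI + etaC P * dC + etaA P * dA)).
  { apply (dpl_plus (fun s => I s + etaC P * C s) (fun s => etaA P * A s)).
    apply (dpl_plus I (fun s => etaC P * C s)); auto. apply dpl_scal; auto. apply dpl_scal; auto. }
  apply (dpl_eqd _ _ (0 - beta1 P * ((dI + etaC P * dC + etaA P * dA) * S t + (I t + etaC P * C t + etaA P * A t) * dS)
     - (mu P + psi P) * dS)); [ring|].
  apply (dpl_minus (fun s => Lam P - beta1 P * (I s + etaC P * C s + etaA P * A s) * S s) (fun s => (mu P + psi P) * S s)).
  apply (dpl_minus (fun _ => Lam P) (fun s => beta1 P * (I s + etaC P * C s + etaA P * A s) * S s)).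
  apply dpl_const.
  apply (dpl_eqd _ _ (beta1 P * (dI + etaC P * dC + etaA P * dA) * S t + (beta1 P * (I t + etaC P * C t + etaA P * A t)) * dS)); [ring|].
  apply (dpl_mult (fun s => beta1 P * (I s + etaC P * C s + etaA P * A s)) S); auto.
  apply dpl_scal; auto.
  apply dpl_scal; auto.
Qed.
End Der.

Definition KF P M := Lam P + beta1 P * (1 + etaC P + etaA P) * M * M
  + (mu P + psi P + xi3 P + alpha P + omega P + phi P + xi2 P + rho P + xi1 P) * M.

Lemma f_bounds P q M : hypP P -> posq q -> sS q <= M -> sI q <= M -> sC q <= M -> sA q <= M ->
  Rabs (fS P q) <= KF P M /\ Rabs (fI P q) <= KF P M /\ Rabs (fC P q) <= KF P M /\ Rabs (fA P q) <= KF P M.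
Proof.
  intros H [H1 [H2 [H3 H4]]] HSM HIM HCM HAM.
  pose proof (basics P H) as (Hb1 & Hx1 & Hx2 & Hx3 & HT & HSb & HIb & HCb & HAb & _).
  pose proof H as (HL & Hm & Hb & Hr & Hp & Ha & Ho & Hps & HeC & HeA & HR).
  rewrite fS_eq, fI_eq, fC_eq, fA_eq. unfold KF.
  set (T := sI q + etaC P * sC q + etaA P * sA q).
  assert (HT0 : 0 <= T) by (unfold T; nra).
  assert (HTM : T <= (1 + etaC P + etaA P) * M) by (unfold T; nra).
  assert (B1 : 0 <= beta1 P * T * sS q) by (apply Rmult_le_pos; [apply Rmult_le_pos|]; lra).
  assert (B2 : beta1 P * T * sS q <= beta1 P * (1 + etaC P + etaA P) * M * M).
  { replace (beta1 P * (1 + etaC P + etaA P) * M * M) with (beta1 P * ((1 + etaC P + etaA P) * M) * M) by ring.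
    apply Rmult_le_compat; try lra. apply Rmult_le_pos; lra. apply Rmult_le_compat_l; lra. }
  assert (0 <= (mu P + psi P) * sS q <= (mu P + psi P) * M) by (split; [apply Rmult_le_pos|apply Rmult_le_compat_l]; lra).
  assert (0 <= xi3 P * sI q <= xi3 P * M) by (split; [apply Rmult_le_pos|apply Rmult_le_compat_l]; lra).
  assert (0 <= alpha P * sA q <= alpha P * M) by (split; [apply Rmult_le_pos|apply Rmult_le_compat_l]; lra).
  assert (0 <= omega P * sC q <= omega P * M) by (split; [apply Rmult_le_pos|apply Rmult_le_compat_l]; lra).
  assert (0 <= phi P * sI q <= phi P * M) by (split; [apply Rmult_le_pos|apply Rmult_le_compat_l]; lra).
  assert (0 <= xi2 P * sC q <= xi2 P * M) by (split; [apply Rmult_le_pos|apply Rmult_le_compat_l]; lra).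
  assert (0 <= rho P * sI q <= rho P * M) by (split; [apply Rmult_le_pos|apply Rmult_le_compat_l]; lra).
  assert (0 <= xi1 P * sA q <= xi1 P * M) by (split; [apply Rmult_le_pos|apply Rmult_le_compat_l]; lra).
  assert (0 <= mu P * M) by nra. assert (0 <= psi P * M) by nra.
  repeat split; apply Rabs_le; split; lra.
Qed.

Lemma abs_mul_le a b A B : Rabs a <= A -> Rabs b <= B -> Rabs (a * b) <= A * B.
Proof.
  intros. rewrite Rabs_mult. apply Rmult_le_compat; auto; apply Rabs_pos.
Qed.
Lemma abs_div_le a A K : 0 < K -> Rabs a <= A -> Rabs (a / K) <= A / K.
Proof.
  intros HK Ha. unfold Rdiv. rewrite Rabs_mult, (Rabs_right (/ K)) by (left; apply Rinv_0_lt_compat; auto).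
  apply Rmult_le_compat_r; auto. left; apply Rinv_0_lt_compat; auto.
Qed.
Lemma abs_sub_le a b A B : Rabs a <= A -> Rabs b <= B -> Rabs (a - b) <= A + B.
Proof.
  intros. unfold Rminus. eapply Rle_trans; [apply Rabs_triang|]. rewrite Rabs_Ropp. lra.
Qed.
Lemma abs_add_le a b A B : Rabs a <= A -> Rabs b <= B -> Rabs (a + b) <= A + B.
Proof. intros. eapply Rle_trans; [apply Rabs_triang|]. lra. Qed.

Definition KG P M := 2 * (M + Sb P) * KF P M + 2 * (M / Cb P + M / Ib P) * (KF P M / Cb P + KF P M / Ib P)
  + 2 * (M / Ab P + M / Ib P) * (KF P M / Ab P + KF P M / Ib P).
Definition KS P M := beta1 P * ((KF P M + etaC P * KF P M + etaA P * KF P M) * M + (M + etaC P * M + etaA P * M) * KF P M)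
  + (mu P + psi P) * KF P M.

Lemma dG_bound P q M : hypP P -> posq q -> sS q <= M -> sI q <= M -> sC q <= M -> sA q <= M ->
  Rabs (dGr P (sS q) (sI q) (sC q) (sA q) (fS P q) (fI P q) (fC P q) (fA P q)) <= KG P M /\
  Rabs (dfSr P (sS q) (sI q) (sC q) (sA q) (fS P q) (fI P q) (fC P q) (fA P q)) <= KS P M.
Proof.
  intros H Hq HSM HIM HCM HAM.
  destruct (f_bounds P q M H Hq HSM HIM HCM HAM) as (F1 & F2 & F3 & F4).
  pose proof (basics P H) as (Hb1 & Hx1 & Hx2 & Hx3 & HT & HSb & HIb & HCb & HAb & _).
  pose proof H as (HL & Hm & Hb & Hr & Hp & Ha & Ho & Hps & HeC & HeA & HR).
  destruct Hq as [H1 [H2 [H3 H4]]].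
  assert (Ab1 : forall u, 0 < u -> u <= M -> Rabs u <= M) by (intros; rewrite Rabs_right; lra).
  split.
  - unfold dGr, KG.
    apply abs_add_le; [apply abs_add_le|].
    + rewrite Rmult_assoc. replace (2 * (M + Sb P) * KF P M) with (2 * ((M + Sb P) * KF P M)) by ring.
      rewrite Rabs_mult, (Rabs_right 2) by lra. apply Rmult_le_compat_l; [lra|].
      apply abs_mul_le; auto. apply abs_sub_le; auto. rewrite Rabs_right; lra.
    + rewrite Rmult_assoc. replace (2 * (M / Cb P + M / Ib P) * (KF P M / Cb P + KF P M / Ib P)) with (2 * ((M / Cb P + M / Ib P) * (KF P M / Cb P + KF P M / Ib P))) by ring.
      rewrite Rabs_mult, (Rabs_right 2) by lra. apply Rmult_le_compat_l; [lra|].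
      apply abs_mul_le; apply abs_sub_le; apply abs_div_le; auto.
    + rewrite Rmult_assoc. replace (2 * (M / Ab P + M / Ib P) * (KF P M / Ab P + KF P M / Ib P)) with (2 * ((M / Ab P + M / Ib P) * (KF P M / Ab P + KF P M / Ib P))) by ring.
      rewrite Rabs_mult, (Rabs_right 2) by lra. apply Rmult_le_compat_l; [lra|].
      apply abs_mul_le; apply abs_sub_le; apply abs_div_le; auto.
  - unfold dfSr, KS.
    replace (- (beta1 P * ((fI P q + etaC P * fC P q + etaA P * fA P q) * sS q + (sI q + etaC P * sC q + etaA P * sA q) * fS P q)) - (mu P + psi P) * fS P q)
      with (- (beta1 P * ((fI P q + etaC P * fC P q + etaA P * fA P q) * sS q + (sI q + etaC P * sC q + etaA P * sA q) * fS P q)) + - ((mu P + psi P) * fS P q)) by ring.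
    apply abs_add_le; rewrite Rabs_Ropp.
    + rewrite Rabs_mult, (Rabs_right (beta1 P)) by lra. apply Rmult_le_compat_l; [lra|].
      assert (Hm1 : forall k u U, 0 < k -> Rabs u <= U -> Rabs (k * u) <= k * U).
      { intros k u U Hk Hu. rewrite Rabs_mult, Rabs_right by lra. apply Rmult_le_compat_l; lra. }
      apply abs_add_le; apply abs_mul_le.
      * apply abs_add_le; [apply abs_add_le|]; [exact F2 | apply Hm1; [lra| exact F3] | apply Hm1; [lra| exact F4]].
      * apply Ab1; lra.
      * apply abs_add_le; [apply abs_add_le|]; [apply Ab1; lra | apply Hm1; [lra| apply Ab1; lra] | apply Hm1; [lra| apply Ab1; lra]].
      * exact F1.
    + rewrite Rabs_mult, (Rabs_right (mu P + psi P)) by lra. apply Rmult_le_compat_l; [lra| auto].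
Qed.

Definition Vs P q := Vr P (sS q) (sI q) (sC q) (sA q).

Lemma sol_der P x t : is_solution P x -> 0 < t ->
  derivable_pt_lim (fun s => sS (x s)) t (fS P (x t)) /\
  derivable_pt_lim (fun s => sI (x s)) t (fI P (x t)) /\
  derivable_pt_lim (fun s => sC (x s)) t (fC P (x t)) /\
  derivable_pt_lim (fun s => sA (x s)) t (fA P (x t)) /\
  derivable_pt_lim (fun s => sE (x s)) t (fE P (x t)).
Proof. intros [H _] Ht. apply H; auto. Qed.

Lemma dVs P x t : hypP P -> is_solution P x -> 0 < t -> posq (x t) ->
  derivable_pt_lim (fun s => Vs P (x s)) t
   (Vdr P (sS (x t)) (sI (x t)) (sC (x t)) (sA (x t)) (fS P (x t)) (fI P (x t)) (fC P (x t)) (fA P (x t))).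
Proof.
  intros H Hs Ht [h1 [h2 [h3 h4]]]. destruct (sol_der P x t Hs Ht) as (d1 & d2 & d3 & d4 & _).
  unfold Vs. exact (dV_lem P (fun s => sS (x s)) (fun s => sI (x s)) (fun s => sC (x s)) (fun s => sA (x s))
    t _ _ _ _ d1 d2 d3 d4 H h1 h2 h3 h4).
Qed.

Lemma Vd_nonpos P q : hypP P -> posq q ->
  Vdr P (sS q) (sI q) (sC q) (sA q) (fS P q) (fI P q) (fC P q) (fA P q) <= 0.
Proof.
  intros H Hq. set (M := Rmax (Rmax (sS q) (sI q)) (Rmax (sC q) (sA q))).
  destruct Hq as [h1 [h2 [h3 h4]]].
  assert (sS q <= M) by (unfold M; eapply Rle_trans; [apply Rmax_l| apply Rmax_l]).
  assert (sI q <= M) by (unfold M; eapply Rle_trans; [apply Rmax_r| apply Rmax_l]).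
  assert (sC q <= M) by (unfold M; eapply Rle_trans; [apply Rmax_l| apply Rmax_r]).
  assert (sA q <= M) by (unfold M; eapply Rle_trans; [apply Rmax_r| apply Rmax_r]).
  eapply Rle_trans; [apply (Vd_bound P q M); auto; repeat split; auto|].
  assert (0 < c0 P M) by (apply c0_pos; auto; lra).
  assert (0 <= Gr P (sS q) (sI q) (sC q) (sA q)) by (unfold Gr; pose proof (Rle_0_sqr (sS q - Sb P)); pose proof (Rle_0_sqr (sC q / Cb P - sI q / Ib P)); pose proof (Rle_0_sqr (sA q / Ab P - sI q / Ib P)); unfold Rsqr in *; lra).
  nra.
Qed.

Lemma term_bounds w b u V0 : 0 < w -> 0 < b -> 0 < u -> w * gf (u / b) <= V0 ->
  b * exp (- (V0 / w + 1)) <= u <= b * (2 * (V0 / w + 1)).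
Proof.
  intros Hw Hb Hu H.
  assert (Hg : gf (u / b) <= V0 / w).
  { apply Rmult_le_reg_l with w; auto. replace (w * (V0 / w)) with V0 by (field; lra). auto. }
  assert (Hub : 0 < u / b) by pos.
  pose proof (gf_lo _ _ Hub Hg). pose proof (gf_hi _ _ Hub Hg).
  split.
  - apply Rmult_le_reg_r with (/ b). apply Rinv_0_lt_compat; auto.
    replace (b * exp (- (V0 / w + 1)) * / b) with (exp (- (V0 / w + 1))) by (field; lra). auto.
  - apply Rmult_le_reg_r with (/ b). apply Rinv_0_lt_compat; auto.
    replace (b * (2 * (V0 / w + 1)) * / b) with (2 * (V0 / w + 1)) by (field; lra). auto.
Qed.

Definition lo P V0 := Rmin (Rmin (Sb P * exp (- (V0 / Sb P + 1))) (Ib P * exp (- (V0 / Ib P + 1))))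
  (Rmin (Cb P * exp (- (V0 / (cw P * Cb P) + 1))) (Ab P * exp (- (V0 / (aw P * Ab P) + 1)))).
Definition hi P V0 := Rmax (Rmax (Sb P * (2 * (V0 / Sb P + 1))) (Ib P * (2 * (V0 / Ib P + 1))))
  (Rmax (Cb P * (2 * (V0 / (cw P * Cb P) + 1))) (Ab P * (2 * (V0 / (aw P * Ab P) + 1)))).

Lemma lo_pos P V0 : hypP P -> 0 < lo P V0.
Proof.
  intro H. pose proof (basics P H) as (Hb1 & Hx1 & Hx2 & Hx3 & HT & HSb & HIb & HCb & HAb & HE & Hcw & Haw).
  unfold lo. repeat apply Rmin_pos; apply Rmult_lt_0_compat; auto; apply exp_pos.
Qed.

Lemma V_bounds P q V0 : hypP P -> posq q -> Vs P q <= V0 ->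
  lo P V0 <= sS q <= hi P V0 /\ lo P V0 <= sI q <= hi P V0 /\
  lo P V0 <= sC q <= hi P V0 /\ lo P V0 <= sA q <= hi P V0.
Proof.
  intros H [h1 [h2 [h3 h4]]] HV.
  pose proof (basics P H) as (Hb1 & Hx1 & Hx2 & Hx3 & HT & HSb & HIb & HCb & HAb & HE & Hcw & Haw).
  unfold Vs, Vr in HV.
  assert (g1 : 0 <= gf (sS q / Sb P)) by (apply gf_nonneg; pos).
  assert (g2 : 0 <= gf (sI q / Ib P)) by (apply gf_nonneg; pos).
  assert (g3 : 0 <= gf (sC q / Cb P)) by (apply gf_nonneg; pos).
  assert (g4 : 0 <= gf (sA q / Ab P)) by (apply gf_nonneg; pos).
  assert (0 <= Sb P * gf (sS q / Sb P)) by (apply Rmult_le_pos; lra).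
  assert (0 <= Ib P * gf (sI q / Ib P)) by (apply Rmult_le_pos; lra).
  assert (0 <= cw P * Cb P * gf (sC q / Cb P)) by (apply Rmult_le_pos; [apply Rmult_le_pos|]; lra).
  assert (0 <= aw P * Ab P * gf (sA q / Ab P)) by (apply Rmult_le_pos; [apply Rmult_le_pos|]; lra).
  rewrite <- !Rmult_assoc in HV.
  destruct (term_bounds (Sb P) (Sb P) (sS q) V0) as [a1 b1]; auto; [lra|].
  destruct (term_bounds (Ib P) (Ib P) (sI q) V0) as [a2 b2]; auto; [lra|].
  destruct (term_bounds (cw P * Cb P) (Cb P) (sC q) V0) as [a3 b3]; auto; [pos|lra|].
  destruct (term_bounds (aw P * Ab P) (Ab P) (sA q) V0) as [a4 b4]; auto; [pos|lra|].
  unfold lo, hi.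
  pose proof (Rmin_l (Rmin (Sb P * exp (- (V0 / Sb P + 1))) (Ib P * exp (- (V0 / Ib P + 1))))
    (Rmin (Cb P * exp (- (V0 / (cw P * Cb P) + 1))) (Ab P * exp (- (V0 / (aw P * Ab P) + 1))))).
  pose proof (Rmin_r (Rmin (Sb P * exp (- (V0 / Sb P + 1))) (Ib P * exp (- (V0 / Ib P + 1))))
    (Rmin (Cb P * exp (- (V0 / (cw P * Cb P) + 1))) (Ab P * exp (- (V0 / (aw P * Ab P) + 1))))).
  pose proof (Rmin_l (Sb P * exp (- (V0 / Sb P + 1))) (Ib P * exp (- (V0 / Ib P + 1)))).
  pose proof (Rmin_r (Sb P * exp (- (V0 / Sb P + 1))) (Ib P * exp (- (V0 / Ib P + 1)))).
  pose proof (Rmin_l (Cb P * exp (- (V0 / (cw P * Cb P) + 1))) (Ab P * exp (- (V0 / (aw P * Ab P) + 1)))).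
  pose proof (Rmin_r (Cb P * exp (- (V0 / (cw P * Cb P) + 1))) (Ab P * exp (- (V0 / (aw P * Ab P) + 1)))).
  pose proof (Rmax_l (Rmax (Sb P * (2 * (V0 / Sb P + 1))) (Ib P * (2 * (V0 / Ib P + 1))))
    (Rmax (Cb P * (2 * (V0 / (cw P * Cb P) + 1))) (Ab P * (2 * (V0 / (aw P * Ab P) + 1))))).
  pose proof (Rmax_r (Rmax (Sb P * (2 * (V0 / Sb P + 1))) (Ib P * (2 * (V0 / Ib P + 1))))
    (Rmax (Cb P * (2 * (V0 / (cw P * Cb P) + 1))) (Ab P * (2 * (V0 / (aw P * Ab P) + 1))))).
  pose proof (Rmax_l (Sb P * (2 * (V0 / Sb P + 1))) (Ib P * (2 * (V0 / Ib P + 1)))).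
  pose proof (Rmax_r (Sb P * (2 * (V0 / Sb P + 1))) (Ib P * (2 * (V0 / Ib P + 1)))).
  pose proof (Rmax_l (Cb P * (2 * (V0 / (cw P * Cb P) + 1))) (Ab P * (2 * (V0 / (aw P * Ab P) + 1)))).
  pose proof (Rmax_r (Cb P * (2 * (V0 / (cw P * Cb P) + 1))) (Ab P * (2 * (V0 / (aw P * Ab P) + 1)))).
  repeat split; lra.
Qed.

Lemma cont_below f t d m t0 : t0 < t -> derivable_pt_lim f t d ->
  (forall s, t0 <= s < t -> m <= f s) -> m <= f t.
Proof.
  intros Ht Hd Hs. apply Rnot_lt_le. intro Hlt.
  destruct (dpl_cont f t d Hd (m - f t) ltac:(lra)) as [del [Hdel H]].
  set (s := Rmax t0 (t - del / 2)).
  assert (t0 <= s) by apply Rmax_l. assert (t - del/2 <= s) by apply Rmax_r.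
  assert (s < t) by (unfold s; apply Rmax_lub_lt; lra).
  specialize (H s ltac:(rewrite Rabs_left by lra; lra)). specialize (Hs s ltac:(lra)).
  apply Rabs_lt_between in H. lra.
Qed.
Lemma cont_pos_after f t d : derivable_pt_lim f t d -> 0 < f t ->
  exists h, 0 < h /\ forall s, t <= s < t + h -> 0 < f s.
Proof.
  intros Hd Hp. destruct (dpl_cont f t d Hd (f t) Hp) as [del [Hdel H]].
  exists del; split; auto. intros s Hs. specialize (H s ltac:(rewrite Rabs_right by lra; lra)).
  apply Rabs_lt_between in H. lra.
Qed.

Lemma core P x t0 : hypP P -> is_solution P x -> 0 < t0 -> posq (x t0) ->
  forall t, t0 <= t -> posq (x t).
Proof.
  intros H Hs Ht0 Hp0.
  apply (cont_ind (fun t => posq (x t)) t0 Hp0).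
  - intros t Ht Hbef.
    assert (HV : forall s, t0 <= s < t -> Vs P (x s) <= Vs P (x t0)).
    { intros s Hs'. assert (Vs P (x s) - Vs P (x t0) <= 0 * (s - t0)); [|lra].
      apply (mvt_ub (fun u => Vs P (x u)) (fun u => Vdr P (sS (x u)) (sI (x u)) (sC (x u)) (sA (x u)) (fS P (x u)) (fI P (x u)) (fC P (x u)) (fA P (x u)))); [lra| |].
      - intros c Hc. apply dVs; auto; try lra. apply Hbef; lra.
      - intros c Hc. apply Vd_nonpos; auto. apply Hbef; lra. }
    assert (HB : forall s, t0 <= s < t -> lo P (Vs P (x t0)) <= sS (x s) /\ lo P (Vs P (x t0)) <= sI (x s) /\
                  lo P (Vs P (x t0)) <= sC (x s) /\ lo P (Vs P (x t0)) <= sA (x s)).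
    { intros s Hs'. destruct (V_bounds P (x s) (Vs P (x t0)) H (Hbef s Hs') (HV s Hs')) as (a1 & a2 & a3 & a4). tauto. }
    pose proof (lo_pos P (Vs P (x t0)) H).
    destruct (sol_der P x t Hs ltac:(lra)) as (d1 & d2 & d3 & d4 & _).
    repeat split.
    + assert (lo P (Vs P (x t0)) <= sS (x t)); [|lra]. apply (cont_below _ t _ _ t0 Ht d1). intros; apply HB; auto.
    + assert (lo P (Vs P (x t0)) <= sI (x t)); [|lra]. apply (cont_below _ t _ _ t0 Ht d2). intros; apply HB; auto.
    + assert (lo P (Vs P (x t0)) <= sC (x t)); [|lra]. apply (cont_below _ t _ _ t0 Ht d3). intros; apply HB; auto.
    + assert (lo P (Vs P (x t0)) <= sA (x t)); [|lra]. apply (cont_below _ t _ _ t0 Ht d4). intros; apply HB; auto.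
  - intros t Ht Hupto. destruct (Hupto t ltac:(lra)) as (p1 & p2 & p3 & p4).
    destruct (sol_der P x t Hs ltac:(lra)) as (d1 & d2 & d3 & d4 & _).
    destruct (cont_pos_after _ _ _ d1 p1) as [h1 [Hh1 H1]].
    destruct (cont_pos_after _ _ _ d2 p2) as [h2 [Hh2 H2]].
    destruct (cont_pos_after _ _ _ d3 p3) as [h3 [Hh3 H3]].
    destruct (cont_pos_after _ _ _ d4 p4) as [h4 [Hh4 H4]].
    exists (Rmin (Rmin h1 h2) (Rmin h3 h4)). split; [repeat apply Rmin_pos; auto|].
    intros s Hs'.
    pose proof (Rmin_l (Rmin h1 h2) (Rmin h3 h4)). pose proof (Rmin_r (Rmin h1 h2) (Rmin h3 h4)).
    pose proof (Rmin_l h1 h2). pose proof (Rmin_r h1 h2). pose proof (Rmin_l h3 h4). pose proof (Rmin_r h3 h4).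
    repeat split; [apply H1| apply H2| apply H3| apply H4]; lra.
Qed.

Lemma Vmono P x t0 : hypP P -> is_solution P x -> 0 < t0 -> posq (x t0) ->
  forall s t, t0 <= s <= t -> Vs P (x t) <= Vs P (x s).
Proof.
  intros H Hs Ht0 Hp0 s t Hst. pose proof (core P x t0 H Hs Ht0 Hp0) as Hc.
  assert (Vs P (x t) - Vs P (x s) <= 0 * (t - s)); [|lra].
  apply (mvt_ub (fun u => Vs P (x u)) (fun u => Vdr P (sS (x u)) (sI (x u)) (sC (x u)) (sA (x u)) (fS P (x u)) (fI P (x u)) (fC P (x u)) (fA P (x u)))); [lra| |].
  - intros c Hc'. apply dVs; auto; try lra. apply Hc; lra.
  - intros c Hc'. apply Vd_nonpos; auto. apply Hc; lra.
Qed.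

Lemma sq_abs_lt d e : 0 < e -> Rabs d < e -> d ^ 2 < e ^ 2.
Proof.
  intros He Hd. rewrite <- pow2_abs. pose proof (Rabs_pos d). simpl. nra.
Qed.

Lemma dist_small q p e : 0 < e ->
  Rabs (sS q - sS p) < e / 3 -> Rabs (sI q - sI p) < e / 3 -> Rabs (sC q - sC p) < e / 3 ->
  Rabs (sA q - sA p) < e / 3 -> Rabs (sE q - sE p) < e / 3 -> dist5 q p < e.
Proof.
  intros He H1 H2 H3 H4 H5. unfold dist5. assert (He3 : 0 < e / 3) by lra.
  pose proof (sq_abs_lt _ _ He3 H1). pose proof (sq_abs_lt _ _ He3 H2).
  pose proof (sq_abs_lt _ _ He3 H3). pose proof (sq_abs_lt _ _ He3 H4).
  pose proof (sq_abs_lt _ _ He3 H5).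
  pose proof (pow2_ge_0 (sS q - sS p)). pose proof (pow2_ge_0 (sI q - sI p)).
  pose proof (pow2_ge_0 (sC q - sC p)). pose proof (pow2_ge_0 (sA q - sA p)).
  pose proof (pow2_ge_0 (sE q - sE p)).
  rewrite <- (sqrt_pow2 e) by lra. apply sqrt_lt_1_alt. split; [lra|].
  replace ((e/3)^2) with (e^2/9) in * by field. lra.
Qed.

Lemma comp_le_dist q p :
  Rabs (sS q - sS p) <= dist5 q p /\ Rabs (sI q - sI p) <= dist5 q p /\ Rabs (sC q - sC p) <= dist5 q p /\
  Rabs (sA q - sA p) <= dist5 q p /\ Rabs (sE q - sE p) <= dist5 q p.
Proof.
  unfold dist5.
  pose proof (pow2_ge_0 (sS q - sS p)). pose proof (pow2_ge_0 (sI q - sI p)).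
  pose proof (pow2_ge_0 (sC q - sC p)). pose proof (pow2_ge_0 (sA q - sA p)).
  pose proof (pow2_ge_0 (sE q - sE p)).
  assert (K : forall d s, 0 <= s -> d ^ 2 <= s -> Rabs d <= sqrt s).
  { intros d s Hs Hd. rewrite <- (sqrt_pow2 (Rabs d)) by apply Rabs_pos. rewrite pow2_abs.
    apply sqrt_le_1_alt. auto. }
  repeat split; apply K; lra.
Qed.

Lemma tends0_plus f g : tends f 0 -> tends g 0 -> tends (fun t => f t + g t) 0.
Proof. intros. pose proof (tends_plus f g 0 0 H H0). rewrite Rplus_0_l in H1. auto. Qed.

Lemma attract P x t0 : hypP P -> is_solution P x -> 0 < t0 -> posq (x t0) ->
  forall eps, 0 < eps -> exists T, forall t, T <= t -> dist5 (x t) (pe P) < eps.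
Proof.
  intros H Hs Ht0 Hp0.
  pose proof (basics P H) as (Hb1 & Hx1 & Hx2 & Hx3 & HT & HSb & HIb & HCb & HAb & HE & Hcw & Haw).
  pose proof (eq_rels P H) as (E1 & E2 & E3 & E4 & E5).
  pose proof H as (HL & Hm & Hb & Hr & Hp & Ha & Ho & Hps & HeC & HeA & HR).
  set (V0 := Vs P (x t0)).
  set (m := lo P V0). set (M := hi P V0).
  assert (Hmp : 0 < m) by (apply lo_pos; auto).
  assert (Hpos : forall t, t0 <= t -> posq (x t)) by (apply (core P x t0); auto).
  set (S := fun t => sS (x t)). set (I := fun t => sI (x t)). set (C := fun t => sC (x t)).
  set (A := fun t => sA (x t)).
  assert (Hbd : forall t, t0 <= t ->
    m <= S t <= M /\ m <= I t <= M /\ m <= C t <= M /\ m <= A t <= M).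
  { intros t Ht. unfold S, I, C, A. apply V_bounds; auto. apply (Vmono P x t0); auto; lra. }
  assert (HM : 0 < M) by (destruct (Hbd t0 (Rle_refl _)) as [[a b] _]; lra).
  assert (HVc : cauchy_inf (fun t => Vs P (x t))).
  { apply (mono_cauchy _ t0 0). intros s t Hst. apply (Vmono P x t0); auto; lra.
    intros t Ht. destruct (Hpos t Ht) as (a1 & a2 & a3 & a4). apply Vr_nonneg; auto. }
  assert (HG : tends (fun t => Gr P (S t) (I t) (C t) (A t)) 0).
  { apply (barb2 (fun t => Vs P (x t))
       (fun t => Vdr P (S t) (I t) (C t) (A t) (fS P (x t)) (fI P (x t)) (fC P (x t)) (fA P (x t)))
       (fun t => Gr P (S t) (I t) (C t) (A t))
       (fun t => dGr P (S t) (I t) (C t) (A t) (fS P (x t)) (fI P (x t)) (fC P (x t)) (fA P (x t)))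
       t0 (KG P M) (c0 P M)).
    - apply c0_pos; auto.
    - intros t Ht. apply dVs; auto; try lra.
    - intros t Ht. destruct (Hbd t Ht) as ([? ?] & [? ?] & [? ?] & [? ?]).
      apply Vd_bound; auto.
    - intros t Ht. unfold Gr. pose proof (Rle_0_sqr (S t - Sb P)); pose proof (Rle_0_sqr (C t / Cb P - I t / Ib P)); pose proof (Rle_0_sqr (A t / Ab P - I t / Ib P)); unfold Rsqr in *; lra.
    - intros t Ht. destruct (sol_der P x t Hs ltac:(lra)) as (d1 & d2 & d3 & d4 & _).
      exact (dG_lem P S I C A t _ _ _ _ d1 d2 d3 d4).
    - intros t Ht. destruct (Hbd t Ht) as ([? ?] & [? ?] & [? ?] & [? ?]).
      apply (dG_bound P (x t) M); auto.
    - auto. }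
  assert (Gpart : forall a b c, 0 <= a*a -> 0 <= b*b -> 0 <= c*c ->
     Rabs (a ^ 2) <= Rabs (a*a + b*b + c*c) /\ Rabs (b ^ 2) <= Rabs (a*a + b*b + c*c) /\
     Rabs (c ^ 2) <= Rabs (a*a + b*b + c*c)).
  { intros a b c Ha' Hb' Hc'. rewrite !Rabs_right by (simpl; lra). simpl. lra. }
  assert (tS : tends (fun t => S t - Sb P) 0).
  { apply tends_sq. apply (tends_dom _ _ t0 HG). intros t Ht. unfold Gr.
    apply Gpart; apply Rle_0_sqr. }
  assert (tzy : tends (fun t => C t / Cb P - I t / Ib P) 0).
  { apply tends_sq. apply (tends_dom _ _ t0 HG). intros t Ht. unfold Gr.
    apply Gpart; apply Rle_0_sqr. }
  assert (twy : tends (fun t => A t / Ab P - I t / Ib P) 0).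
  { apply tends_sq. apply (tends_dom _ _ t0 HG). intros t Ht. unfold Gr.
    apply Gpart; apply Rle_0_sqr. }
  assert (tfS : tends (fun t => fS P (x t)) 0).
  { apply (barb1 S (fun t => fS P (x t))
      (fun t => dfSr P (S t) (I t) (C t) (A t) (fS P (x t)) (fI P (x t)) (fC P (x t)) (fA P (x t))) t0 (KS P M)).
    - intros t Ht. destruct (sol_der P x t Hs ltac:(lra)) as (d1 & d2 & d3 & d4 & _). exact d1.
    - intros t Ht. destruct (sol_der P x t Hs ltac:(lra)) as (d1 & d2 & d3 & d4 & _).
      exact (dfS_lem P S I C A t _ _ _ _ d1 d2 d3 d4).
    - intros t Ht. destruct (Hbd t Ht) as ([? ?] & [? ?] & [? ?] & [? ?]).
      apply (dG_bound P (x t) M); auto.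
    - apply (tends_cauchy _ (Sb P)). apply tends_unshift. auto. }
  set (Tb := Ib P + etaC P * Cb P + etaA P * Ab P).
  set (k1 := 1 + etaC P * Cb P / Ib P + etaA P * Ab P / Ib P).
  assert (Hk1 : 0 < k1) by (unfold k1; pos).
  assert (tI : tends (fun t => I t - Ib P) 0).
  { apply (tends_ext (fun t => / k1 * ((- / (beta1 P * S t)) * ((beta1 P * Tb + (mu P + psi P)) * (S t - Sb P) + fS P (x t))
        + (- (etaC P * Cb P)) * (C t / Cb P - I t / Ib P) + (- (etaA P * Ab P)) * (A t / Ab P - I t / Ib P))) _ _ t0).
    - intros t Ht. destruct (Hbd t Ht) as ([? ?] & [? ?] & [? ?] & [? ?]).
      rewrite fS_eq. fold (S t) (I t) (C t) (A t).
      assert (HLam : Lam P = beta1 P * Tb * Sb P + (mu P + psi P) * Sb P) by (unfold Tb; lra).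
      rewrite HLam. unfold k1, Tb. field.
      assert (0 < Ib P + etaC P * Cb P + etaA P * Ab P) by pos. repeat split; lra.
    - apply tends_scal. apply tends0_plus; [apply tends0_plus|].
      + apply (tends_bmult _ _ (/ (beta1 P * m)) t0).
        * apply tends0_plus. apply tends_scal; auto. auto.
        * intros t Ht. destruct (Hbd t Ht) as ([? ?] & [? ?] & [? ?] & [? ?]).
          assert (0 < beta1 P * S t) by pos.
          rewrite Rabs_Ropp, Rabs_right by (left; apply Rinv_0_lt_compat; auto).
          apply Rinv_le_contravar. pos. apply Rmult_le_compat_l; lra.
      + apply tends_scal; auto.
      + apply tends_scal; auto. }
  assert (tC : tends (fun t => C t - Cb P) 0).
  { apply (tends_ext (fun t => Cb P * (C t / Cb P - I t / Ib P) + (Cb P / Ib P) * (I t - Ib P)) _ _ t0).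
    intros t Ht. field; lra. apply tends0_plus; apply tends_scal; auto. }
  assert (tA : tends (fun t => A t - Ab P) 0).
  { apply (tends_ext (fun t => Ab P * (A t / Ab P - I t / Ib P) + (Ab P / Ib P) * (I t - Ib P)) _ _ t0).
    intros t Ht. field; lra. apply tends0_plus; apply tends_scal; auto. }
  assert (tE : tends (fun t => sE (x t) - Eb P) 0).
  { apply (elin_tends _ (fun t => psi P * (S t - Sb P)) t0 (mu P) Hm).
    - intros t Ht. destruct (sol_der P x t Hs ltac:(lra)) as (d1 & d2 & d3 & d4 & d5).
      apply (dpl_eqd _ _ (fE P (x t) - 0)).
      rewrite fE_eq. fold (S t). lra.
      apply (dpl_minus (fun s => sE (x s)) (fun _ => Eb P)); auto. apply dpl_const.
    - apply tends_scal; auto. }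
  intros eps Heps.
  destruct (tS (eps/3) ltac:(lra)) as [T1 H1]. destruct (tI (eps/3) ltac:(lra)) as [T2 H2].
  destruct (tC (eps/3) ltac:(lra)) as [T3 H3]. destruct (tA (eps/3) ltac:(lra)) as [T4 H4].
  destruct (tE (eps/3) ltac:(lra)) as [T5 H5].
  exists (Rmax (Rmax T1 T2) (Rmax T3 (Rmax T4 T5))). intros t Ht.
  pose proof (Rmax_l (Rmax T1 T2) (Rmax T3 (Rmax T4 T5))). pose proof (Rmax_r (Rmax T1 T2) (Rmax T3 (Rmax T4 T5))).
  pose proof (Rmax_l T1 T2). pose proof (Rmax_r T1 T2). pose proof (Rmax_l T3 (Rmax T4 T5)).
  pose proof (Rmax_r T3 (Rmax T4 T5)). pose proof (Rmax_l T4 T5). pose proof (Rmax_r T4 T5).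
  specialize (H1 t ltac:(lra)). specialize (H2 t ltac:(lra)). specialize (H3 t ltac:(lra)).
  specialize (H4 t ltac:(lra)). specialize (H5 t ltac:(lra)).
  rewrite Rminus_0_r in *.
  apply dist_small; auto.
Qed.

Ltac rc_tac := repeat (cbv beta; match goal with
  | |- rc (fun _ => ?c) => apply (rc_const c)
  | |- rc (fun t => @?a t + @?b t) => apply (rc_plus a b)
  | |- rc (fun t => @?a t - @?b t) => apply (rc_minus a b)
  | |- rc (fun t => @?a t * @?b t) => apply (rc_mult a b)
  end); cbv beta; try assumption.

Lemma wpos f a k h : rc f ->
  (forall t, 0 < t < h -> derivable_pt_lim f t (a t - k * f t)) ->
  (forall t, 0 < t < h -> 0 < a t) -> 0 <= f 0 -> forall t, 0 < t < h -> 0 < f t.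
Proof.
  intros Hrc Hd Ha H0 t Ht.
  assert (Hexp : forall s, derivable_pt_lim (fun u => exp (k * u)) s (exp (k * s) * (k * 1))).
  { intro s. apply (dpl_exp (fun u => k * u)). apply dpl_scal. apply dpl_id. }
  assert (Hr : rc (fun u => f u * exp (k * u))).
  { apply (rc_mult f (fun u => exp (k * u))); auto. apply (rc_of_dpl _ _ (Hexp 0)). }
  pose proof (rc_incr (fun u => f u * exp (k * u)) (fun u => a u * exp (k * u)) h Hr) as Hi.
  assert (f 0 * exp (k * 0) < f t * exp (k * t)).
  { apply Hi; auto.
    - intros u Hu. apply (dpl_eqd _ _ ((a u - k * f u) * exp (k * u) + f u * (exp (k * u) * (k * 1)))); [ring|].
      apply (dpl_mult f (fun u => exp (k * u))); auto.
    - intros u Hu. apply Rmult_lt_0_compat; [auto| apply exp_pos]. }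
  rewrite Rmult_0_r, exp_0, Rmult_1_r in H.
  pose proof (exp_pos (k * t)). nra.
Qed.

Lemma start P x : hypP P -> is_solution P x -> OmegaP P (x 0) -> ~ OmegaP0 P (x 0) ->
  exists t0, 0 < t0 /\ posq (x t0).
Proof.
  intros H Hs Hom Hnot.
  pose proof (basics P H) as (Hb1 & Hx1 & Hx2 & Hx3 & HT & HSb & HIb & HCb & HAb & HE & Hcw & Haw).
  pose proof H as (HL & Hm & Hb & Hr & Hp & Ha & Ho & Hps & HeC & HeA & HR).
  pose proof Hom as (S0 & I0 & C0 & A0 & E0 & _).
  pose proof Hs as [Hd Hc].
  assert (rS : rc (fun t => sS (x t))) by (intros e He; apply (Hc sS); [left; reflexivity| auto]).
  assert (rI : rc (fun t => sI (x t))) by (intros e He; apply (Hc sI); [right; left; reflexivity| auto]).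
  assert (rC : rc (fun t => sC (x t))) by (intros e He; apply (Hc sC); [right; right; left; reflexivity| auto]).
  assert (rA : rc (fun t => sA (x t))) by (intros e He; apply (Hc sA); [right; right; right; left; reflexivity| auto]).
  assert (rfS : rc (fun t => fS P (x t))).
  { change (rc (fun t => Lam P - beta1 P * (sI (x t) + etaC P * sC (x t) + etaA P * sA (x t)) * sS (x t) - (mu P + psi P) * sS (x t))).
    rc_tac. }
  assert (rfI : rc (fun t => fI P (x t))).
  { change (rc (fun t => beta1 P * (sI (x t) + etaC P * sC (x t) + etaA P * sA (x t)) * sS (x t) - xi3 P * sI (x t) + alpha P * sA (x t) + omega P * sC (x t))).
    rc_tac. }
  assert (hS : exists h, 0 < h /\ forall t, 0 < t < h -> 0 < sS (x t)).
  { destruct (Rle_lt_or_eq_dec 0 (sS (x 0)) S0) as [Sp|Sz].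
    - destruct (rc_pos _ rS Sp) as [h [Hh Hh2]]. exists h; split; auto. intros t Ht; apply Hh2; lra.
    - assert (0 < fS P (x 0)) by (rewrite fS_eq, <- Sz; lra).
      destruct (rc_pos _ rfS H0) as [h [Hh Hh2]]. exists h; split; auto. intros t Ht.
      rewrite Sz. apply (rc_incr (fun t => sS (x t)) (fun t => fS P (x t)) h rS); auto.
      intros u Hu. apply (sol_der P x u Hs); lra. intros u Hu. apply Hh2; lra. }
  assert (hI : exists h, 0 < h /\ forall t, 0 < t < h -> 0 < sI (x t)).
  { destruct (Rle_lt_or_eq_dec 0 (sI (x 0)) I0) as [Ip|Iz].
    - destruct (rc_pos _ rI Ip) as [h [Hh Hh2]]. exists h; split; auto. intros t Ht; apply Hh2; lra.
    - assert (CA : 0 < sC (x 0) \/ 0 < sA (x 0)).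
      { destruct (Rle_lt_or_eq_dec 0 (sC (x 0)) C0) as [Cp|Cz]; [left; auto|].
        destruct (Rle_lt_or_eq_dec 0 (sA (x 0)) A0) as [Ap|Az]; [right; auto|].
        exfalso. apply Hnot. split; [exact Hom|]. repeat split; lra. }
      assert (0 < fI P (x 0)).
      { rewrite fI_eq, <- Iz.
        assert (0 <= etaC P * sC (x 0)) by (apply Rmult_le_pos; lra).
        assert (0 <= etaA P * sA (x 0)) by (apply Rmult_le_pos; lra).
        assert (0 <= beta1 P * (0 + etaC P * sC (x 0) + etaA P * sA (x 0)) * sS (x 0)) by
          (apply Rmult_le_pos; [apply Rmult_le_pos|]; lra).
        destruct CA; nra. }
      destruct (rc_pos _ rfI H0) as [h [Hh Hh2]]. exists h; split; auto. intros t Ht.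
      rewrite Iz. apply (rc_incr (fun t => sI (x t)) (fun t => fI P (x t)) h rI); auto.
      intros u Hu. apply (sol_der P x u Hs); lra. intros u Hu. apply Hh2; lra. }
  destruct hS as [hs [Hhs HS]]. destruct hI as [hi [Hhi HI]].
  assert (HC : forall t, 0 < t < hi -> 0 < sC (x t)).
  { apply (wpos (fun t => sC (x t)) (fun t => phi P * sI (x t)) (xi2 P) hi rC); auto.
    - intros t Ht. rewrite <- fC_eq. apply (sol_der P x t Hs); lra.
    - intros t Ht. apply Rmult_lt_0_compat; auto. }
  assert (HA : forall t, 0 < t < hi -> 0 < sA (x t)).
  { apply (wpos (fun t => sA (x t)) (fun t => rho P * sI (x t)) (xi1 P) hi rA); auto.
    - intros t Ht. rewrite <- fA_eq. apply (sol_der P x t Hs); lra.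
    - intros t Ht. apply Rmult_lt_0_compat; auto. }
  exists (Rmin hs hi / 2). pose proof (Rmin_l hs hi). pose proof (Rmin_r hs hi).
  assert (0 < Rmin hs hi) by (apply Rmin_pos; auto).
  split; [lra|]. repeat split; [apply HS| apply HI| apply HC| apply HA]; lra.
Qed.

Lemma term_small w b u d : 0 < w -> 0 < b -> Rabs (u - b) < d -> d <= b / 2 ->
  w * gf (u / b) <= 2 * w * (d * d) / (b * b).
Proof.
  intros Hw Hb Hd Hdb. apply Rabs_lt_between in Hd.
  assert (Hu : 1/2 <= u / b).
  { apply Rmult_le_reg_r with b; auto. replace (u / b * b) with u by (field; lra). lra. }
  pose proof (gf_upper2 _ Hu).
  assert ((u / b - 1)^2 <= d * d / (b * b)).
  { replace ((u / b - 1)^2) with ((u - b) * (u - b) / (b * b)) by (field; lra).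
    apply Rmult_le_compat_r. left; apply Rinv_0_lt_compat; nra. nra. }
  replace (2 * w * (d * d) / (b * b)) with (w * (2 * (d * d / (b * b)))) by (field; lra).
  apply Rmult_le_compat_l; lra.
Qed.

Lemma term_close w b u gm r : 0 < w -> 0 < b -> 0 < u -> 0 < r < 1 ->
  gm = Rmin (gf (1 - r)) (gf (1 + r)) -> w * gf (u / b) < w * gm -> Rabs (u - b) < r * b.
Proof.
  intros Hw Hb Hu Hr Hgm H.
  assert (gf (u / b) < gm) by (apply Rmult_lt_reg_l with w; auto).
  subst gm. pose proof (gf_small r (u / b) Hr ltac:(pos) H0).
  replace (u - b) with (b * (u / b - 1)) by (field; lra).
  rewrite Rabs_mult, Rabs_right by lra. rewrite Rmult_comm. apply Rmult_lt_compat_r; auto.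
Qed.

Lemma stab P : hypP P -> forall eps, 0 < eps -> exists delta, 0 < delta /\
  forall x, is_solution P x -> dist5 (x 0) (pe P) < delta ->
  forall t, 0 <= t -> dist5 (x t) (pe P) < eps.
Proof.
  intros H eps Heps.
  pose proof (basics P H) as (Hb1 & Hx1 & Hx2 & Hx3 & HT & HSb & HIb & HCb & HAb & HE & Hcw & Haw).
  pose proof (eq_rels P H) as (E1 & E2 & E3 & E4 & E5).
  pose proof H as (HL & Hm & Hb & Hr & Hp & Ha & Ho & Hps & HeC & HeA & HR).
  set (Sp := Sb P + Ib P + Cb P + Ab P + psi P * Sb P / mu P + 1).
  assert (HSp : 1 <= Sp) by (unfold Sp; assert (0 <= psi P * Sb P / mu P) by (apply Rmult_le_pos; [apply Rmult_le_pos; lra| left; apply Rinv_0_lt_compat; lra]); lra).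
  set (r := Rmin (1/2) (eps / (6 * Sp))).
  assert (Hr0 : 0 < r) by (apply Rmin_pos; [lra| apply Rdiv_lt_0_compat; lra]).
  assert (Hr1 : r <= 1/2) by apply Rmin_l.
  assert (Hr2 : r * Sp <= eps / 6).
  { apply Rle_trans with (eps / (6 * Sp) * Sp). apply Rmult_le_compat_r; [lra| apply Rmin_r].
    right; field; lra. }
  set (gm := Rmin (gf (1 - r)) (gf (1 + r))).
  assert (Hgm : 0 < gm) by (apply gf_min_pos; lra).
  set (wm := Rmin (Rmin (Sb P) (Ib P)) (Rmin (cw P * Cb P) (aw P * Ab P))).
  assert (Hwm : 0 < wm) by (unfold wm; repeat apply Rmin_pos; pos).
  set (eta0 := gm * wm).
  set (Sig := Sb P / (Sb P * Sb P) + Ib P / (Ib P * Ib P) + cw P * Cb P / (Cb P * Cb P) + aw P * Ab P / (Ab P * Ab P)).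
  assert (HSig : 0 < Sig) by (unfold Sig; pos).
  set (pm := Rmin (Rmin (Sb P) (Ib P)) (Rmin (Cb P) (Ab P))).
  assert (Hpm : 0 < pm) by (unfold pm; repeat apply Rmin_pos; auto).
  set (delta := Rmin (Rmin 1 (gm * wm / (8 * Sig + 1))) (Rmin (pm / 4) (eps / 13))).
  assert (Hd0 : 0 < delta) by (unfold delta; repeat apply Rmin_pos; try lra; apply Rdiv_lt_0_compat; [pos| lra]).
  assert (Hd1 : delta <= 1) by (unfold delta; eapply Rle_trans; [apply Rmin_l| apply Rmin_l]).
  assert (Hd2 : delta <= gm * wm / (8 * Sig + 1)) by (unfold delta; eapply Rle_trans; [apply Rmin_l| apply Rmin_r]).
  assert (Hd3 : delta <= pm / 4) by (unfold delta; eapply Rle_trans; [apply Rmin_r| apply Rmin_l]).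
  assert (Hd4 : delta <= eps / 13) by (unfold delta; eapply Rle_trans; [apply Rmin_r| apply Rmin_r]).
  assert (Hpm1 : pm <= Sb P) by (unfold pm; eapply Rle_trans; [apply Rmin_l| apply Rmin_l]).
  assert (Hpm2 : pm <= Ib P) by (unfold pm; eapply Rle_trans; [apply Rmin_l| apply Rmin_r]).
  assert (Hpm3 : pm <= Cb P) by (unfold pm; eapply Rle_trans; [apply Rmin_r| apply Rmin_l]).
  assert (Hpm4 : pm <= Ab P) by (unfold pm; eapply Rle_trans; [apply Rmin_r| apply Rmin_r]).
  assert (Hw1 : wm <= Sb P) by (unfold wm; eapply Rle_trans; [apply Rmin_l| apply Rmin_l]).
  assert (Hw2 : wm <= Ib P) by (unfold wm; eapply Rle_trans; [apply Rmin_l| apply Rmin_r]).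
  assert (Hw3 : wm <= cw P * Cb P) by (unfold wm; eapply Rle_trans; [apply Rmin_r| apply Rmin_l]).
  assert (Hw4 : wm <= aw P * Ab P) by (unfold wm; eapply Rle_trans; [apply Rmin_r| apply Rmin_r]).
  exists delta. split; auto.
  intros x Hs H0 t Ht.
  destruct (Req_dec t 0) as [->|Htn].
  { lra. }
  pose proof Hs as [Hd Hc].
  destruct (Hc sS ltac:(left; reflexivity) delta Hd0) as [d1 [Hd1' R1]].
  destruct (Hc sI ltac:(right; left; reflexivity) delta Hd0) as [d2 [Hd2' R2]].
  destruct (Hc sC ltac:(right; right; left; reflexivity) delta Hd0) as [d3 [Hd3' R3]].
  destruct (Hc sA ltac:(right; right; right; left; reflexivity) delta Hd0) as [d4 [Hd4' R4]].
  destruct (Hc sE ltac:(right; right; right; right; reflexivity) delta Hd0) as [d5 [Hd5' R5]].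
  set (s := Rmin t (Rmin (Rmin d1 d2) (Rmin d3 (Rmin d4 d5))) / 2).
  assert (Hm0 : 0 < Rmin t (Rmin (Rmin d1 d2) (Rmin d3 (Rmin d4 d5)))) by (repeat apply Rmin_pos; auto; lra).
  pose proof (Rmin_l t (Rmin (Rmin d1 d2) (Rmin d3 (Rmin d4 d5)))).
  pose proof (Rmin_r t (Rmin (Rmin d1 d2) (Rmin d3 (Rmin d4 d5)))).
  pose proof (Rmin_l (Rmin d1 d2) (Rmin d3 (Rmin d4 d5))). pose proof (Rmin_r (Rmin d1 d2) (Rmin d3 (Rmin d4 d5))).
  pose proof (Rmin_l d1 d2). pose proof (Rmin_r d1 d2). pose proof (Rmin_l d3 (Rmin d4 d5)).
  pose proof (Rmin_r d3 (Rmin d4 d5)). pose proof (Rmin_l d4 d5). pose proof (Rmin_r d4 d5).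
  assert (Hs0 : 0 < s) by (unfold s; lra). assert (Hst : s < t) by (unfold s; lra).
  specialize (R1 s ltac:(unfold s; lra)). specialize (R2 s ltac:(unfold s; lra)).
  specialize (R3 s ltac:(unfold s; lra)). specialize (R4 s ltac:(unfold s; lra)).
  specialize (R5 s ltac:(unfold s; lra)).
  destruct (comp_le_dist (x 0) (pe P)) as (D1 & D2 & D3 & D4 & D5). simpl in D1, D2, D3, D4, D5.
  assert (two : forall a b c, Rabs (a - b) < delta -> Rabs (b - c) <= dist5 (x 0) (pe P) -> Rabs (a - c) < 2 * delta).
  { intros a b c Ha1 Hb1'. replace (a - c) with ((a - b) + (b - c)) by ring.
    eapply Rle_lt_trans; [apply Rabs_triang| lra]. }
  pose proof (two _ _ _ R1 D1) as Q1. pose proof (two _ _ _ R2 D2) as Q2.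
  pose proof (two _ _ _ R3 D3) as Q3. pose proof (two _ _ _ R4 D4) as Q4.
  pose proof (two _ _ _ R5 D5) as Q5.
  assert (Hposs : posq (x s)).
  { pose proof (Rabs_lt_between _ _ Q1). pose proof (Rabs_lt_between _ _ Q2).
    pose proof (Rabs_lt_between _ _ Q3). pose proof (Rabs_lt_between _ _ Q4).
    repeat split; lra. }
  assert (HVs : Vs P (x s) < eta0).
  { unfold Vs, Vr.
    assert (Hdd : 2 * delta <= pm / 2) by lra.
    pose proof (term_small (Sb P) (Sb P) _ _ HSb HSb Q1 ltac:(lra)).
    pose proof (term_small (Ib P) (Ib P) _ _ HIb HIb Q2 ltac:(lra)).
    pose proof (term_small (cw P * Cb P) (Cb P) _ _ ltac:(pos) HCb Q3 ltac:(lra)).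
    pose proof (term_small (aw P * Ab P) (Ab P) _ _ ltac:(pos) HAb Q4 ltac:(lra)).
    rewrite <- !Rmult_assoc.
    assert (Sum : 2 * Sb P * (2 * delta * (2 * delta)) / (Sb P * Sb P) + 2 * Ib P * (2 * delta * (2 * delta)) / (Ib P * Ib P)
       + 2 * (cw P * Cb P) * (2 * delta * (2 * delta)) / (Cb P * Cb P) + 2 * (aw P * Ab P) * (2 * delta * (2 * delta)) / (Ab P * Ab P)
       = 8 * (delta * delta) * Sig) by (unfold Sig; field; lra).
    assert (8 * (delta * delta) * Sig < eta0).
    { apply Rle_lt_trans with (8 * delta * Sig). 
      assert (delta * delta <= delta) by (apply Rle_trans with (delta * 1); [apply Rmult_le_compat_l; lra| lra]).
      apply Rmult_le_compat_r; lra.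
      apply Rle_lt_trans with (8 * Sig * (gm * wm / (8 * Sig + 1))).
      replace (8 * delta * Sig) with (8 * Sig * delta) by ring. apply Rmult_le_compat_l; lra.
      unfold eta0. replace (8 * Sig * (gm * wm / (8 * Sig + 1))) with (gm * wm * (8 * Sig / (8 * Sig + 1))) by (field; lra).
      assert (0 < gm * wm) by pos.
      assert (8 * Sig / (8 * Sig + 1) < 1).
      { apply Rmult_lt_reg_r with (8 * Sig + 1); [lra|]. replace (8 * Sig / (8 * Sig + 1) * (8 * Sig + 1)) with (8 * Sig) by (field; lra). lra. }
      rewrite <- (Rmult_1_r (gm * wm)) at 2. apply Rmult_lt_compat_l; auto. }
    lra. }
  assert (Hpos : forall u, s <= u -> posq (x u)) by (apply (core P x s); auto).
  assert (HV : Vs P (x t) < eta0) by (pose proof (Vmono P x s H Hs Hs0 Hposs s t ltac:(lra)); lra).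
  destruct (Hpos t ltac:(lra)) as (p1 & p2 & p3 & p4).
  assert (HVt := HV). unfold Vs, Vr in HVt.
  assert (g1 : 0 <= gf (sS (x t) / Sb P)) by (apply gf_nonneg; pos).
  assert (g2 : 0 <= gf (sI (x t) / Ib P)) by (apply gf_nonneg; pos).
  assert (g3 : 0 <= gf (sC (x t) / Cb P)) by (apply gf_nonneg; pos).
  assert (g4 : 0 <= gf (sA (x t) / Ab P)) by (apply gf_nonneg; pos).
  rewrite <- !Rmult_assoc in HVt.
  assert (0 <= Sb P * gf (sS (x t) / Sb P)) by (apply Rmult_le_pos; lra).
  assert (0 <= Ib P * gf (sI (x t) / Ib P)) by (apply Rmult_le_pos; lra).
  assert (0 <= cw P * Cb P * gf (sC (x t) / Cb P)) by (apply Rmult_le_pos; [left; pos| lra]).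
  assert (0 <= aw P * Ab P * gf (sA (x t) / Ab P)) by (apply Rmult_le_pos; [left; pos| lra]).
  assert (Hr01 : 0 < r < 1) by lra.
  assert (C1 : Rabs (sS (x t) - Sb P) < r * Sb P).
  { apply (term_close (Sb P) _ _ gm r HSb HSb p1 Hr01 eq_refl).
    assert (gm * wm <= gm * Sb P) by (apply Rmult_le_compat_l; lra). unfold eta0 in HVt. lra. }
  assert (C2 : Rabs (sI (x t) - Ib P) < r * Ib P).
  { apply (term_close (Ib P) _ _ gm r HIb HIb p2 Hr01 eq_refl).
    assert (gm * wm <= gm * Ib P) by (apply Rmult_le_compat_l; lra). unfold eta0 in HVt. lra. }
  assert (C3 : Rabs (sC (x t) - Cb P) < r * Cb P).
  { apply (term_close (cw P * Cb P) _ _ gm r ltac:(pos) HCb p3 Hr01 eq_refl).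
    assert (gm * wm <= gm * (cw P * Cb P)) by (apply Rmult_le_compat_l; lra). unfold eta0 in HVt. lra. }
  assert (C4 : Rabs (sA (x t) - Ab P) < r * Ab P).
  { apply (term_close (aw P * Ab P) _ _ gm r ltac:(pos) HAb p4 Hr01 eq_refl).
    assert (gm * wm <= gm * (aw P * Ab P)) by (apply Rmult_le_compat_l; lra). unfold eta0 in HVt. lra. }
  assert (C5 : Rabs (sE (x t) - Eb P) <= psi P * (r * Sb P) / mu P + 2 * delta).
  { assert (HSclose : forall u, s <= u -> Rabs (psi P * (sS (x u) - Sb P)) <= psi P * (r * Sb P)).
    { intros u Hu. destruct (Hpos u Hu) as (q1 & q2 & q3 & q4).
      assert (HVu : Vs P (x u) < eta0) by (pose proof (Vmono P x s H Hs Hs0 Hposs s u ltac:(lra)); lra).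
      unfold Vs, Vr in HVu. rewrite <- !Rmult_assoc in HVu.
      assert (0 <= gf (sS (x u) / Sb P)) by (apply gf_nonneg; pos).
      assert (0 <= gf (sI (x u) / Ib P)) by (apply gf_nonneg; pos).
      assert (0 <= gf (sC (x u) / Cb P)) by (apply gf_nonneg; pos).
      assert (0 <= gf (sA (x u) / Ab P)) by (apply gf_nonneg; pos).
      assert (0 <= Ib P * gf (sI (x u) / Ib P)) by (apply Rmult_le_pos; lra).
      assert (0 <= cw P * Cb P * gf (sC (x u) / Cb P)) by (apply Rmult_le_pos; [left; pos| lra]).
      assert (0 <= aw P * Ab P * gf (sA (x u) / Ab P)) by (apply Rmult_le_pos; [left; pos| lra]).
      assert (Rabs (sS (x u) - Sb P) < r * Sb P).
      { apply (term_close (Sb P) _ _ gm r HSb HSb q1 Hr01 eq_refl).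
        assert (gm * wm <= gm * Sb P) by (apply Rmult_le_compat_l; lra). unfold eta0 in HVu. lra. }
      rewrite Rabs_mult, (Rabs_right (psi P)) by lra. apply Rmult_le_compat_l; lra. }
    pose proof (elin (fun u => sE (x u) - Eb P) (fun u => psi P * (sS (x u) - Sb P)) s (mu P) (psi P * (r * Sb P)) Hm) as El.
    assert (Hex : forall u, s <= u -> exp (- mu P * (u - s)) <= 1).
    { intros u Hu. rewrite <- exp_0. destruct (Req_dec u s) as [->|]. right; f_equal; ring.
      left; apply exp_increasing. assert (0 < mu P * (u - s)) by (apply Rmult_lt_0_compat; lra). lra. }
    specialize (El ltac:(intros u Hu; destruct (sol_der P x u Hs ltac:(lra)) as (_ & _ & _ & _ & dE);
        apply (dpl_eqd _ _ (fE P (x u) - 0)); [rewrite fE_eq; lra|];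
        apply (dpl_minus (fun s => sE (x s)) (fun _ => Eb P)); [exact dE| apply dpl_const]) HSclose t ltac:(lra)).
    specialize (Hex t ltac:(lra)).
    pose proof (Rabs_pos (sE (x s) - Eb P)). pose proof (exp_pos (- mu P * (t - s))).
    assert (Rabs (sE (x s) - Eb P) * exp (- mu P * (t - s)) <= Rabs (sE (x s) - Eb P)).
    { rewrite <- (Rmult_1_r (Rabs (sE (x s) - Eb P))) at 2. apply Rmult_le_compat_l; lra. }
    simpl in Q5. lra. }
  apply dist_small; auto; simpl.
  - assert (r * Sb P <= r * Sp) by (apply Rmult_le_compat_l; [lra| unfold Sp; assert (0 <= psi P * Sb P / mu P) by (apply Rmult_le_pos; [apply Rmult_le_pos; lra| left; apply Rinv_0_lt_compat; lra]); lra]). lra.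
  - assert (r * Ib P <= r * Sp) by (apply Rmult_le_compat_l; [lra| unfold Sp; assert (0 <= psi P * Sb P / mu P) by (apply Rmult_le_pos; [apply Rmult_le_pos; lra| left; apply Rinv_0_lt_compat; lra]); lra]). lra.
  - assert (r * Cb P <= r * Sp) by (apply Rmult_le_compat_l; [lra| unfold Sp; assert (0 <= psi P * Sb P / mu P) by (apply Rmult_le_pos; [apply Rmult_le_pos; lra| left; apply Rinv_0_lt_compat; lra]); lra]). lra.
  - assert (r * Ab P <= r * Sp) by (apply Rmult_le_compat_l; [lra| unfold Sp; assert (0 <= psi P * Sb P / mu P) by (apply Rmult_le_pos; [apply Rmult_le_pos; lra| left; apply Rinv_0_lt_compat; lra]); lra]). lra.
  - assert (psi P * (r * Sb P) / mu P = r * (psi P * Sb P / mu P)) by (field; lra).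
    assert (r * (psi P * Sb P / mu P) <= r * Sp) by (apply Rmult_le_compat_l; [lra| unfold Sp; lra]). lra.
Qed.

Lemma uniq P q : hypP P -> is_equilibrium P q -> 0 < sI q -> 0 < sC q -> 0 < sA q -> q = pe P.
Proof.
  intros H (F1 & F2 & F3 & F4 & F5) HI HC HA.
  pose proof (basics P H) as (Hb1 & Hx1 & Hx2 & Hx3 & HT & HSb & HIb & HCb & HAb & HE & Hcw & Haw).
  pose proof (eq_rels P H) as (E1 & E2 & E3 & E4 & E5).
  pose proof H as (HL & Hm & Hb & Hr & Hp & Ha & Ho & Hps & HeC & HeA & HR).
  rewrite fS_eq in F1. rewrite fI_eq in F2. rewrite fC_eq in F3. rewrite fA_eq in F4. rewrite fE_eq in F5.
  assert (eC : sC q = phi P * sI q / xi2 P) by (apply solve_div; lra).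
  assert (eA : sA q = rho P * sI q / xi1 P) by (apply solve_div; lra).
  assert (eCb : Cb P = phi P * Ib P / xi2 P) by reflexivity.
  assert (eAb : Ab P = rho P * Ib P / xi1 P) by reflexivity.
  set (K := xi3 P - alpha P * rho P / xi1 P - omega P * phi P / xi2 P).
  assert (TI : sI q + etaC P * sC q + etaA P * sA q = sI q * Tk P) by (rewrite eC, eA; unfold Tk; field; lra).
  assert (TIb : Ib P + etaC P * Cb P + etaA P * Ab P = Ib P * Tk P) by (rewrite eCb, eAb; unfold Tk; field; lra).
  assert (G1 : Ib P * (beta1 P * Tk P * Sb P - K) = 0).
  { rewrite TIb in E2. unfold K. rewrite eCb, eAb in E2. rewrite <- E2. field; lra. }
  assert (G2 : sI q * (beta1 P * Tk P * sS q - K) = 0).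
  { rewrite TI in F2. unfold K. rewrite eC, eA in F2. rewrite <- F2. field; lra. }
  assert (S1 : beta1 P * Tk P * Sb P = K).
  { apply Rmult_integral in G1. destruct G1; lra. }
  assert (S2 : beta1 P * Tk P * sS q = K).
  { apply Rmult_integral in G2. destruct G2; lra. }
  assert (HS : sS q = Sb P).
  { apply Rmult_eq_reg_l with (beta1 P * Tk P). lra. assert (0 < beta1 P * Tk P) by pos. lra. }
  rewrite TI, HS in F1. rewrite TIb in E1.
  assert (HI' : sI q = Ib P).
  { apply Rmult_eq_reg_l with (beta1 P * Tk P * Sb P). nra. assert (0 < beta1 P * Tk P * Sb P) by pos. lra. }
  destruct q as [s i c a e]. simpl in *. unfold pe. subst s i.
  f_equal.
  - rewrite eC. reflexivity.
  - rewrite eA. reflexivity.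
  - unfold Eb. apply solve_div; lra.
Qed.

Theorem mainTheorem4 (P : Params)
  (hLam : 0 < Lam P) (hmu : 0 < mu P) (hbeta : 0 < beta P) (hrho : 0 < rho P)
  (hphi : 0 < phi P) (halpha : 0 < alpha P) (homega : 0 < omega P)
  (hpsi : 0 <= psi P) (hetaC0 : 0 < etaC P) (hetaC1 : etaC P <= 1)
  (hetaA : 1 <= etaA P)
  (hR0 : repro_number P > 1) :
  exists p : State,
    (* p is the unique endemic equilibrium (equilibrium with I, C, A > 0) *)
    is_equilibrium P p /\
    0 < sI p /\ 0 < sC p /\ 0 < sA p /\
    (forall q : State, is_equilibrium P q ->
       0 < sI q -> 0 < sC q -> 0 < sA q -> q = p) /\
    (* its first and last components *)
    sS p = mu P * (xi1 P * (phi P + xi2 P) + rho P * xi2 P)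
           / (beta1 P * (xi1 P * (xi2 P + etaC P * phi P)
                         + etaA P * rho P * xi2 P)) /\
    sE p = psi P * sS p / mu P /\
    (* global asymptotic stability in Omega_P \ Omega_P0 *)
    GAS_on (is_solution P) (fun x => OmegaP P x /\ ~ OmegaP0 P x) p.
Proof.
  assert (H : hypP P) by (apply hyp_of; auto).
  pose proof (basics P H) as (Hb1 & Hx1 & Hx2 & Hx3 & HT & HSb & HIb & HCb & HAb & HE & Hcw & Haw).
  pose proof (eq_rels P H) as (E1 & E2 & E3 & E4 & E5).
  exists (pe P). split.
  { unfold is_equilibrium. rewrite fS_eq, fI_eq, fC_eq, fA_eq, fE_eq. simpl. tauto. }
  split; [simpl; auto|]. split; [simpl; auto|]. split; [simpl; auto|].
  split; [intros q Hq HI HC HA; apply uniq; auto|].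
  split; [reflexivity|]. split; [reflexivity|].
  split.
  - intros eps Heps. destruct (stab P H eps Heps) as [delta [Hd Hd2]].
    exists delta; split; [auto|]. intros x Hs _ H0 t Ht. apply Hd2; auto.
  - intros x Hs [Hom Hnot] eps Heps.
    destruct (start P x H Hs Hom Hnot) as [t0 [Ht0 Hp0]].
    apply (attract P x t0 H Hs Ht0 Hp0 eps Heps).
Qed.
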